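(* Let $D\subset\mathbb{R}^2$ be a bounded, simply connected open set with $C^\infty$ boundary $\Gamma=\partial D$ of length $L$, and let $\gamma\in C^\infty([0,L],\mathbb{R}^2)$ be an arc-length parametrization of $\Gamma$. Let $\alpha>0$, $k>0$ and $\lambda$ be constants, and let $u$ be the scattered field of the impenetrable scattering problem described in the context (with sound-soft, sound-hard or impedance boundary condition). Then for every integer $N\ge 0$ the $N$th order normal derivative $\partial_{\mathbf{n}}^N u$ on $\Gamma$ is a linear combination of the functions $\partial_{\boldsymbol{\tau}}^j u$ and $\partial_{\boldsymbol{\tau}}^j\partial_{\mathbf{n}}u$ on $\Gamma$, $0\le j\le N$; that is, there are functions $a^N_j, b^N_j$ on $\Gamma$, not depending on $u$, such that $$\partial_{\mathbf{n}}^N u=\sum_{j=0}^N a^N_j\,\partial_{\boldsymbol{\tau}}^j u+\sum_{j=0}^{N} b^N_j\,\partial_{\boldsymbol{\tau}}^j\partial_{\mathbf{n}}u\quad\text{on }\Gamma.$$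
   Context: Setting: $D_{\rm ex}=\mathbb{R}^2\setminus\overline{D}$. An incident field $\phi$ (a plane wave $e^{ik\mathbf{x}\cdot\mathbf{z}}$ with $|\mathbf{z}|=1$, or a point source $\frac{i}{4}H_0^{(1)}(k|\mathbf{x}-\mathbf{x}_s|)$ with $\mathbf{x}_s$ away from $\Gamma$) illuminates $D$. The total field $u_{\rm tot}=\phi+u$ satisfies $\nabla\cdot\alpha\nabla u_{\rm tot}+k^2u_{\rm tot}=0$ in $D_{\rm ex}$ (away from the source) with one of the boundary conditions $u_{\rm tot}=0$, $\mathbf{n}\cdot\alpha\nabla u_{\rm tot}=0$, or $\mathbf{n}\cdot\alpha\nabla u_{\rm tot}+i\lambda u_{\rm tot}=0$ on $\Gamma$; the scattered field $u$ solves the homogeneous Helmholtz equation $\nabla\cdot\alpha\nabla u+k^2u=0$ in $D_{\rm ex}$, is smooth up to $\Gamma$ from $D_{\rm ex}$, and satisfies the Sommerfeld radiation condition $\lim_{r\to\infty}\sqrt r(\partial_r u-iku)=0$. Here $\mathbf{n}$ is the unit outward normal, $\boldsymbol{\tau}=\dot\gamma$ the unit tangent; $\partial_{\boldsymbol{\tau}}^j$ denotes the $j$th derivative with respect to arc length $s$ along $\Gamma$. Writing points near $\Gamma$ in $D_{\rm ex}$ as $\mathbf{y}=\gamma(s)+\eta\,\mathbf{n}(s)$ with $\eta>0$ small, $\partial_{\mathbf{n}}^N u$ on $\Gamma$ means $\lim_{\eta\to0^+}\partial_\eta^N u$, and $\partial_{\boldsymbol{\tau}}^j\partial_{\mathbf{n}}u$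 means $\lim_{\eta\to 0^+}\partial_s^j\partial_\eta u$. *)

(* Defs.v *)
From Stdlib Require Import Reals Lra List ClassicalEpsilon Factorial.
From Coquelicot Require Import Coquelicot.
Open Scope R_scope.

Definition pt := (R * R)%type.
Definition nrm (p : pt) : R := sqrt (fst p ^ 2 + snd p ^ 2).
Definition dist2 (p q : pt) : R := nrm (fst p - fst q, snd p - snd q).
Definition dot (p q : pt) : R := fst p * fst q + snd p * snd q.
Definition pmove (p : pt) (e : R) (v : pt) : pt :=
  (fst p + e * fst v, snd p + e * snd v).

Definition open2 (D : pt -> Prop) : Prop :=
  forall p, D p -> exists eps, 0 < eps /\ forall q, dist2 p q < eps -> D q.
Definition bounded2 (D : pt -> Prop) : Prop :=
  exists M, forall p, D p -> nrm p <= M.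
Definition closure2 (D : pt -> Prop) (p : pt) : Prop :=
  forall eps, 0 < eps -> exists q, D q /\ dist2 p q < eps.
(* topological boundary (closure2 minus interior; D is open here) *)
Definition bdry (D : pt -> Prop) (p : pt) : Prop := closure2 D p /\ ~ D p.
Definition Dex (D : pt -> Prop) (p : pt) : Prop := ~ closure2 D p.

Definition in01 (t : R) : Prop := 0 <= t <= 1.

(* path-connectedness; paths are continuous maps [0,1] -> D (given as
   continuous maps on R, which is no restriction: extend by constants) *)
Definition path_connected2 (D : pt -> Prop) : Prop :=
  forall p q, D p -> D q ->
    exists f : R -> pt, (forall t, continuous f t) /\ f 0 = p /\ f 1 = q /\
      (forall t, in01 t -> D (f t)).

(* simply connected: nonempty, path connected, and every loop in D is
   null-homotopic in D through loops (a homotopy on [0,1]^2, given as a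
   continuous map on R^2, which is no restriction: compose with clamping) *)
Definition simply_connected2 (D : pt -> Prop) : Prop :=
  (exists p, D p) /\ path_connected2 D /\
  forall f : R -> pt,
    (forall t, continuous f t) -> f 0 = f 1 -> (forall t, in01 t -> D (f t)) ->
    exists H : pt -> pt,
      (forall q, continuous H q) /\
      (forall s t, in01 s -> in01 t -> D (H (s, t))) /\
      (forall t, in01 t -> H (0, t) = f t) /\
      (forall t, in01 t -> H (1, t) = H (1, 0)) /\
      (forall s, in01 s -> H (s, 0) = H (s, 1)).

Definition arclength_param (D : pt -> Prop) (L : R) (gam : R -> pt) : Prop :=
  0 < L /\
  (forall m t, ex_derive_n (fun s => fst (gam s)) m t) /\
  (forall m t, ex_derive_n (fun s => snd (gam s)) m t) /\
  (forall t, gam (t + L) = gam t) /\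
  (forall t, (Derive (fun s => fst (gam s)) t) ^ 2
             + (Derive (fun s => snd (gam s)) t) ^ 2 = 1) /\
  (forall s t, 0 <= s < L -> 0 <= t < L -> gam s = gam t -> s = t) /\
  (forall p, bdry D p <-> exists s, 0 <= s < L /\ p = gam s).

Definition tangent (gam : R -> pt) (s : R) : pt :=
  (Derive (fun t => fst (gam t)) s, Derive (fun t => snd (gam t)) s).

Definition outward_normal (D : pt -> Prop) (gam : R -> pt) (nv : R -> pt) : Prop :=
  forall s,
    nrm (nv s) = 1 /\ dot (nv s) (tangent gam s) = 0 /\
    exists del, 0 < del /\
      forall e, 0 < e < del -> Dex D (pmove (gam s) e (nv s)).

Definition Cderive_n (g : R -> C) (m : nat) (t : R) : C :=
  (Derive_n (fun x => fst (g x)) m t, Derive_n (fun x => snd (g x)) m t).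

(* right limit at 0 of g : R -> C (0 if it does not exist) *)
Definition rlim0 (g : R -> C) : C :=
  match excluded_middle_informative
          (exists l : C, filterlim g (at_right 0) (locally l)) with
  | left H => proj1_sig (constructive_indefinite_description _ H)
  | right _ => RtoC 0
  end.

Definition pd (b : bool) (f : pt -> R) (p : pt) : R :=
  if b then Derive (fun t => f (t, snd p)) (fst p)
  else Derive (fun t => f (fst p, t)) (snd p).
Fixpoint ipd (w : list bool) (f : pt -> R) : pt -> R :=
  match w with nil => f | b :: w' => pd b (ipd w' f) end.

Definition smooth_on (O : pt -> Prop) (f : pt -> R) : Prop :=
  forall w p, O p ->
    continuous (ipd w f) p /\
    ex_derive (fun t => ipd w f (t, snd p)) (fst p) /\
    ex_derive (fun t => ipd w f (fst p, t)) (snd p).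

Definition Csmooth_on (O : pt -> Prop) (u : pt -> C) : Prop :=
  smooth_on O (fun p => fst (u p)) /\ smooth_on O (fun p => snd (u p)).

Definition lap (f : pt -> R) (p : pt) : R :=
  pd true (pd true f) p + pd false (pd false f) p.

Definition helmholtz_at (alpha k : R) (u : pt -> C) (p : pt) : Prop :=
  alpha * lap (fun q => fst (u q)) p + k ^ 2 * fst (u p) = 0 /\
  alpha * lap (fun q => snd (u q)) p + k ^ 2 * snd (u p) = 0.

Definition dr (u : pt -> C) (x : pt) : C :=
  Cderive_n (fun t => u (t * fst x / nrm x, t * snd x / nrm x)) 1 (nrm x).

Definition sommerfeld (k : R) (u : pt -> C) : Prop :=
  forall eps, 0 < eps -> exists R0, forall x, R0 < nrm x ->
    sqrt (nrm x) * Cmod (Cminus (dr u x) (Cmult (0, k) (u x))) < eps.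

Fixpoint harmonic (m : nat) : R :=
  match m with O => 0 | S m' => harmonic m' + / INR (S m') end.

Definition euler_gamma : R := real (Lim_seq (fun n => harmonic n - ln (INR n))).

Definition besselJ0 (x : R) : R :=
  Series (fun m => (-1) ^ m * (x / 2) ^ (2 * m) / (INR (fact m)) ^ 2).
Definition besselY0 (x : R) : R :=
  2 / PI * ((ln (x / 2) + euler_gamma) * besselJ0 x)
  + 2 / PI * Series (fun m => (-1) ^ (m + 1) * harmonic m
                               * (x / 2) ^ (2 * m) / (INR (fact m)) ^ 2).
Definition hankel0 (x : R) : C := (besselJ0 x, besselY0 x).

Inductive incident := PlaneWave (z : pt) | PointSource (xs : pt).

Definition inc_field (k : R) (phi : incident) (x : pt) : C :=
  match phi with
  | PlaneWave z => (cos (k * dot x z), sin (k * dot x z))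
  | PointSource xs => Cmult (0, / 4) (hankel0 (k * dist2 x xs))
  end.

Definition inc_admissible (D : pt -> Prop) (phi : incident) : Prop :=
  match phi with
  | PlaneWave z => nrm z = 1
  | PointSource xs => ~ bdry D xs
  end.

Definition away_from_source (phi : incident) (x : pt) : Prop :=
  match phi with PlaneWave _ => True | PointSource xs => x <> xs end.

Definition Ufun (gam nv : R -> pt) (f : pt -> C) (s e : R) : C :=
  f (pmove (gam s) e (nv s)).

Definition dnN (gam nv : R -> pt) (f : pt -> C) (N : nat) (s : R) : C :=
  rlim0 (fun e => Cderive_n (Ufun gam nv f s) N e).

Definition dtau (gam : R -> pt) (f : pt -> C) (j : nat) (s : R) : C :=
  Cderive_n (fun t => f (gam t)) j s.

Definition dtau_dn (gam nv : R -> pt) (f : pt -> C) (j : nat) (s : R) : C :=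
  rlim0 (fun e => Cderive_n (fun t => Cderive_n (Ufun gam nv f t) 1 e) j s).

Inductive bc_kind := SoundSoft | SoundHard | Impedance.

Definition bc_holds (bc : bc_kind) (alpha lam L : R) (gam nv : R -> pt)
    (utot : pt -> C) : Prop :=
  forall s, 0 <= s <= L ->
  match bc with
  | SoundSoft => utot (gam s) = RtoC 0
  | SoundHard => Cmult (RtoC alpha) (dnN gam nv utot 1 s) = RtoC 0
  | Impedance => Cplus (Cmult (RtoC alpha) (dnN gam nv utot 1 s))
                       (Cmult (0, lam) (utot (gam s))) = RtoC 0
  end.

Definition scattered_field (D : pt -> Prop) (L : R) (gam nv : R -> pt)
    (alpha k lam : R) (bc : bc_kind) (phi : incident) (u : pt -> C) : Prop :=
  inc_admissible D phi /\
  (* smooth up to Gamma from D_ex: smooth on an open neighbourhood of the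
     closure2 of D_ex *)
  (exists O, open2 O /\ (forall p, closure2 (Dex D) p -> O p) /\ Csmooth_on O u) /\
  (forall p, Dex D p -> helmholtz_at alpha k u p) /\
  (forall p, Dex D p -> away_from_source phi p ->
     helmholtz_at alpha k (fun q => Cplus (inc_field k phi q) (u q)) p) /\
  bc_holds bc alpha lam L gam nv (fun q => Cplus (inc_field k phi q) (u q)) /\
  sommerfeld k u.

(* Main.v *)
Require Import Defs.
From Stdlib Require Import Reals Lra Lia List ClassicalEpsilon Classical ZArith.
From Coquelicot Require Import Coquelicot.
Open Scope R_scope.

Definition inbox (p : pt) (d : R) (q : pt) : Prop :=
  Rabs (fst q - fst p) < d /\ Rabs (snd q - snd p) < d.

Definition contc (H : pt -> R) (p : pt) : Prop :=
  forall eps, 0 < eps -> exists d, 0 < d /\ forall q, inbox p d q -> Rabs (H q - H p) < eps.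

Lemma cont_contc : forall H p, continuous H p -> contc H p.
Proof.
  intros H p Hc eps Heps.
  assert (Hl : locally (H p) (ball (H p) eps)).
  { exists (mkposreal eps Heps). intros y Hy; exact Hy. }
  specialize (Hc _ Hl). destruct Hc as [d Hd].
  exists d. split. apply cond_pos.
  intros q [H1 H2]. apply (Hd q). split; assumption.
Qed.

Lemma contc_cont : forall H p, contc H p -> continuous H p.
Proof.
  intros H p Hc P [e He].
  destruct (Hc e (cond_pos e)) as [d [Hd Hq]].
  exists (mkposreal d Hd). intros q [H1 H2]. apply He. apply Hq. split; assumption.
Qed.

Lemma locally_inbox : forall (P : pt -> Prop) p, locally p P <-> exists d, 0 < d /\ forall q, inbox p d q -> P q.
Proof.
  intros P p; split.
  - intros [d Hd]. exists d. split. apply cond_pos. intros q [H1 H2]. apply Hd. split; assumption.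
  - intros [d [Hd Hq]]. exists (mkposreal d Hd). intros q [H1 H2]. apply Hq. split; assumption.
Qed.

Lemma DF : forall (G : pt -> R) p d, 0 < d ->
  (forall q, inbox p d q -> ex_derive (fun x => G (x, snd q)) (fst q) /\ ex_derive (fun y => G (fst q, y)) (snd q)) ->
  contc (pd true G) p -> contc (pd false G) p ->
  differentiable_pt_lim (fun x y => G (x, y)) (fst p) (snd p) (pd true G p) (pd false G p).
Proof.
  intros G p d Hd Hex Hc1 Hc2 eps.
  assert (He2 : 0 < eps / 2) by (destruct eps; simpl; lra).
  destruct (Hc1 _ He2) as [d1 [Hd1 H1]].
  destruct (Hc2 _ He2) as [d2 [Hd2 H2]].
  set (e := Rmin d (Rmin d1 d2)).
  assert (He : 0 < e) by (unfold e; repeat apply Rmin_pos; auto).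
  exists (mkposreal e He). simpl. intros u v Hu Hv.
  assert (Hed : e <= d) by (unfold e; apply Rmin_l).
  assert (Hed1 : e <= d1) by (unfold e; eapply Rle_trans; [apply Rmin_r| apply Rmin_l]).
  assert (Hed2 : e <= d2) by (unfold e; eapply Rle_trans; [apply Rmin_r| apply Rmin_r]).
  destruct p as [x y]; simpl in *.
  destruct (MVT_cor4 (fun x' => G (x', v)) (fun c => Derive (fun x' => G (x', v)) c) x (Rabs (u - x))) with (b := u)
    as [c [Hc Hcx]].
  { intros c Hc. apply Derive_correct.
    apply (proj1 (Hex (c, v) (conj (Rle_lt_trans _ _ _ Hc (Rlt_le_trans _ _ _ Hu Hed)) (Rlt_le_trans _ _ _ Hv Hed)))). }
  { lra. }
  destruct (MVT_cor4 (fun y' => G (x, y')) (fun c => Derive (fun y' => G (x, y')) c) y (Rabs (v - y))) with (b := v)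
    as [c' [Hc' Hcy]].
  { intros c' Hc'. apply Derive_correct.
    refine (proj2 (Hex (x, c') _)). split; simpl.
    rewrite Rminus_diag, Rabs_R0; lra.
    eapply Rle_lt_trans. exact Hc'. lra. }
  { lra. }
  assert (E : G (u, v) - G (x, y) - (pd true G (x, y) * (u - x) + pd false G (x, y) * (v - y))
             = (Derive (fun x' => G (x', v)) c - pd true G (x,y)) * (u - x)
             + (Derive (fun y' => G (x, y')) c' - pd false G (x,y)) * (v - y)).
  { rewrite !Rmult_minus_distr_r. lra. }
  change (Rabs (G (u, v) - G (x, y) - (pd true G (x, y) * (u - x) + pd false G (x, y) * (v - y))) <= eps * Rmax (Rabs (u - x)) (Rabs (v - y))). rewrite E.
  assert (B1 : Rabs (Derive (fun x' => G (x', v)) c - pd true G (x, y)) < eps / 2).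
  { apply (H1 (c, v)). split; simpl; lra. }
  assert (B2 : Rabs (Derive (fun y' => G (x, y')) c' - pd false G (x, y)) < eps / 2).
  { apply (H2 (x, c')). split; simpl. rewrite Rminus_diag, Rabs_R0; lra. lra. }
  eapply Rle_trans. apply Rabs_triang. rewrite !Rabs_mult.
  assert (M1 : Rabs (u - x) <= Rmax (Rabs (u - x)) (Rabs (v - y))) by apply Rmax_l.
  assert (M2 : Rabs (v - y) <= Rmax (Rabs (u - x)) (Rabs (v - y))) by apply Rmax_r.
  assert (P1 := Rabs_pos (u - x)). assert (P2 := Rabs_pos (v - y)).
  assert (P3 := Rabs_pos (Derive (fun x' => G (x', v)) c - pd true G (x, y))).
  assert (P4 := Rabs_pos (Derive (fun y' => G (x, y')) c' - pd false G (x, y))).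
  destruct eps as [eps Heps]; simpl in *. nra.
Qed.

Definition Sm (c : R -> R) : Prop := forall n x, ex_derive (Derive_n c n) x.

Lemma Sm_exn : forall c, Sm c -> forall k x, ex_derive_n c k x.
Proof. intros c H [|k] x; simpl; auto. Qed.

Lemma Sm_ex : forall c x, Sm c -> ex_derive c x.
Proof. intros c x H. exact (H 0%nat x). Qed.

Lemma Derive_n_plus_Sm : forall c d n x, Sm c -> Sm d ->
  Derive_n (fun t => c t + d t) n x = Derive_n c n x + Derive_n d n x.
Proof.
  intros c d n x Hc Hd. apply Derive_n_plus.
  exists (mkposreal 1 Rlt_0_1). intros; apply Sm_exn; auto.
  exists (mkposreal 1 Rlt_0_1). intros; apply Sm_exn; auto.
Qed.

Lemma Sm_plus : forall c d, Sm c -> Sm d -> Sm (fun t => c t + d t).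
Proof.
  intros c d Hc Hd n x.
  apply ex_derive_ext with (fun t => Derive_n c n t + Derive_n d n t).
  intros t; symmetry; apply Derive_n_plus_Sm; auto.
  apply (ex_derive_plus (Derive_n c n) (Derive_n d n)); auto.
Qed.

Lemma Sm_const : forall a, Sm (fun _ => a).
Proof.
  intros a [|n] x.
  - apply ex_derive_const.
  - apply ex_derive_ext with (fun _ => 0).
    intros t. symmetry. apply Derive_n_const.
    apply ex_derive_const.
Qed.


Lemma Derive_n_Derive : forall c n x, Derive_n (Derive c) n x = Derive_n c (S n) x.
Proof.
  intros c n x. replace (S n) with (n + 1)%nat by lia.
  rewrite <- Derive_n_comp. apply Derive_n_ext. intros t. reflexivity.
Qed.

Lemma Sm_Derive : forall c, Sm c -> Sm (Derive c).
Proof.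
  intros c Hc n x.
  apply ex_derive_ext with (Derive_n c (S n)).
  intros t. symmetry. apply Derive_n_Derive.
  apply Hc.
Qed.

Lemma Sm_Derive_n : forall c k, Sm c -> Sm (Derive_n c k).
Proof.
  intros c k Hc n x.
  apply ex_derive_ext with (Derive_n c (n + k)).
  intros t. symmetry. apply Derive_n_comp.
  apply Hc.
Qed.

Lemma Sm_mult_aux : forall n c d, Sm c -> Sm d -> forall k, (k <= n)%nat -> forall x,
  ex_derive (Derive_n (fun t => c t * d t) k) x.
Proof.
  induction n; intros c d Hc Hd k Hk x.
  - assert (k = 0%nat) by lia. subst. simpl.
    apply ex_derive_mult; apply Sm_ex; auto.
  - destruct (Nat.eq_dec k (S n)) as [Heq|Hlt]; [|apply IHn; auto; lia].
    subst k.
      assert (Eq : forall y, Derive_n (fun t => c t * d t) (S n) y =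
         Derive_n (fun t => Derive c t * d t) n y + Derive_n (fun t => c t * Derive d t) n y).
      { intros y. rewrite <- Derive_n_Derive.
        rewrite (Derive_n_ext (Derive (fun t => c t * d t)) (fun t => Derive c t * d t + c t * Derive d t)).
        2:{ intros t. apply Derive_mult; apply Sm_ex; auto. }
        apply Derive_n_plus.
        - exists (mkposreal 1 Rlt_0_1). intros z _ [|j] Hj; simpl; auto.
          apply IHn; auto. apply Sm_Derive; auto. lia.
        - exists (mkposreal 1 Rlt_0_1). intros z _ [|j] Hj; simpl; auto.
          apply IHn; auto. apply Sm_Derive; auto. lia. }
      apply ex_derive_ext with (fun y => Derive_n (fun t => Derive c t * d t) n y + Derive_n (fun t => c t * Derive d t) n y).
      intros; symmetry; apply Eq.
      apply (ex_derive_plus (Derive_n (fun t => Derive c t * d t) n) (Derive_n (fun t => c t * Derive d t) n)).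
      apply IHn; auto. apply Sm_Derive; auto.
      apply IHn; auto. apply Sm_Derive; auto.
Qed.

Lemma Sm_mult : forall c d, Sm c -> Sm d -> Sm (fun t => c t * d t).
Proof. intros c d Hc Hd n x. eapply Sm_mult_aux; eauto. Qed.


Lemma Sm_ext : forall c d, (forall t, c t = d t) -> Sm c -> Sm d.
Proof.
  intros c d E Hc n x. apply ex_derive_ext with (Derive_n c n).
  intros; apply Derive_n_ext; auto. apply Hc.
Qed.

Lemma Sm_opp : forall c, Sm c -> Sm (fun t => - c t).
Proof.
  intros c Hc. apply Sm_ext with (fun t => (-1) * c t). intros; ring.
  apply Sm_mult; auto. apply Sm_const.
Qed.

Lemma Sm_minus : forall c d, Sm c -> Sm d -> Sm (fun t => c t - d t).
Proof.
  intros c d Hc Hd. apply Sm_ext with (fun t => c t + (- d t)). intros; ring.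
  apply Sm_plus; auto. apply Sm_opp; auto.
Qed.

Lemma Sm_cont : forall c x, Sm c -> continuous c x.
Proof. intros c x H. apply (ex_derive_continuous (K:=R_AbsRing) (V:=R_NormedModule)). apply Sm_ex; auto. Qed.

Lemma isd_plus : forall (f g : R -> R) (x a b : R), is_derive f x a -> is_derive g x b ->
  is_derive (fun t => f t + g t) x (a + b).
Proof. intros. apply (is_derive_plus f g x a b); auto. Qed.

Lemma isd_mult : forall (f g : R -> R) (x a b : R), is_derive f x a -> is_derive g x b ->
  is_derive (fun t => f t * g t) x (a * g x + f x * b).
Proof. intros. apply Derive.is_derive_mult; auto. Qed.

Lemma isd_eq : forall (f : R -> R) (x a b : R), is_derive f x a -> a = b -> is_derive f x b.
Proof. intros; subst; auto. Qed.

Lemma isd_const : forall a x : R, is_derive (fun _ : R => a) x 0.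
Proof. intros. apply (is_derive_const (K:=R_AbsRing) (V:=R_NormedModule)). Qed.

Lemma isd_id : forall x : R, is_derive (fun t : R => t) x 1.
Proof. intros. apply (is_derive_id (K:=R_AbsRing)). Qed.

Lemma locR : forall (P : R -> Prop) x d, 0 < d -> (forall y, Rabs (y - x) < d -> P y) -> locally x P.
Proof. intros P x d Hd H. exists (mkposreal d Hd). intros y Hy. apply H. exact Hy. Qed.

Lemma sqrt_sum_lt : forall a b e, Rabs a < e / 2 -> Rabs b < e / 2 -> sqrt (a ^ 2 + b ^ 2) < e.
Proof.
  intros a b e Ha Hb.
  assert (He : 0 < e) by (pose proof (Rabs_pos a); lra).
  rewrite <- (sqrt_pow2 e) by lra.
  apply sqrt_lt_1_alt. split. nra.
  assert (a ^ 2 = Rabs a ^ 2) by (simpl; rewrite Rmult_1_r, Rmult_1_r; rewrite <- Rabs_mult, Rabs_right; [auto| apply Rle_ge, Rle_0_sqr]).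
  assert (b ^ 2 = Rabs b ^ 2) by (simpl; rewrite Rmult_1_r, Rmult_1_r; rewrite <- Rabs_mult, Rabs_right; [auto| apply Rle_ge, Rle_0_sqr]).
  pose proof (Rabs_pos a). pose proof (Rabs_pos b). nra.
Qed.

Lemma inbox_dist : forall p q e, inbox p (e / 2) q -> dist2 p q < e.
Proof.
  intros p q e [H1 H2]. unfold dist2, nrm. simpl.
  apply sqrt_sum_lt; rewrite Rabs_minus_sym; auto.
Qed.

Definition boxed (P : pt -> Prop) (p : pt) : Prop := exists d, 0 < d /\ forall q, inbox p d q -> P q.

Lemma open2_boxed : forall O p, open2 O -> O p -> boxed O p.
Proof.
  intros O p HO Hp. destruct (HO p Hp) as [e [He H]].
  exists (e / 2). split. lra. intros q Hq. apply H. apply inbox_dist. auto.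
Qed.

Lemma inbox_sub : forall p d d' q, d <= d' -> inbox p d q -> inbox p d' q.
Proof. intros p d d' q H [H1 H2]. split; lra. Qed.

Lemma inbox_center : forall p d, 0 < d -> inbox p d p.
Proof. intros p d H. split; rewrite Rminus_diag, Rabs_R0; auto. Qed.

Lemma inbox_tri : forall p q r d1 d2, inbox p d1 q -> inbox q d2 r -> inbox p (d1 + d2) r.
Proof.
  intros p q r d1 d2 [A1 A2] [B1 B2]. split.
  - replace (fst r - fst p) with ((fst r - fst q) + (fst q - fst p)) by ring.
    eapply Rle_lt_trans. apply Rabs_triang. lra.
  - replace (snd r - snd p) with ((snd r - snd q) + (snd q - snd p)) by ring.
    eapply Rle_lt_trans. apply Rabs_triang. lra.
Qed.

Lemma boxed_open : forall P p, boxed P p -> exists d, 0 < d /\ forall q, inbox p d q -> boxed P q.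
Proof.
  intros P p [d [Hd H]]. exists (d / 2). split. lra.
  intros q Hq. exists (d / 2). split. lra. intros r Hr. apply H.
  replace d with (d / 2 + d / 2) by field. eapply inbox_tri; eauto.
Qed.

Definition C1at (G : pt -> R) (q : pt) : Prop :=
  exists d, 0 < d /\
    (forall q', inbox q d q' -> ex_derive (fun x => G (x, snd q')) (fst q') /\ ex_derive (fun y => G (fst q', y)) (snd q')) /\
    contc (pd true G) q /\ contc (pd false G) q.

Lemma CR : forall G q, C1at G q -> forall P1 P2 x d1 d2,
  is_derive P1 x d1 -> is_derive P2 x d2 -> P1 x = fst q -> P2 x = snd q ->
  is_derive (fun y => G (P1 y, P2 y)) x (pd true G q * d1 + pd false G q * d2).
Proof.
  intros G q [d [Hd [Hex [Hc1 Hc2]]]] P1 P2 x d1 d2 H1 H2 E1 E2.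
  pose proof (DF G q d Hd Hex Hc1 Hc2) as HD.
  apply is_derive_Reals.
  apply (derivable_pt_lim_comp_2d (fun a b => G (a, b)) P1 P2 x).
  rewrite E1, E2. exact HD.
  apply is_derive_Reals; auto. apply is_derive_Reals; auto.
Qed.

Lemma smooth_C1at : forall O f w q, open2 O -> smooth_on O f -> O q -> C1at (ipd w f) q.
Proof.
  intros O f w q HO Hf Hq.
  destruct (open2_boxed O q HO Hq) as [d [Hd HB]].
  exists d. split. auto. split.
  - intros q' Hq'. destruct (Hf w q' (HB q' Hq')) as [_ [A B]]. auto.
  - split; apply cont_contc; apply (Hf (_ :: w) q Hq).
Qed.

Lemma smooth_cont : forall O f w q, smooth_on O f -> O q -> continuous (ipd w f) q.
Proof. intros O f w q Hf Hq. apply (Hf w q Hq). Qed.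

Section Terms.
Variables g1 g2 n1 n2 : R -> R.
Hypothesis Hg1 : Sm g1.
Hypothesis Hg2 : Sm g2.
Hypothesis Hn1 : Sm n1.
Hypothesis Hn2 : Sm n2.
Variable f : pt -> R.
Variable O : pt -> Prop.
Hypothesis HO : open2 O.
Hypothesis Hf : smooth_on O f.

Definition Fm (x y : R) : pt := (g1 x + y * n1 x, g2 x + y * n2 x).
Definition Wm (p : pt) : Prop := O (Fm (fst p) (snd p)).

Lemma Fm_comp_cont : forall (a b : R -> R) p, Sm a -> Sm b ->
  continuous (fun q : pt => a (fst q) + snd q * b (fst q)) p.
Proof.
  intros a b [x y] Ha Hb.
  apply (continuous_plus (fun q : pt => a (fst q)) (fun q : pt => snd q * b (fst q))).
  - apply continuous_comp. apply continuous_fst. apply Sm_cont; auto.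
  - apply (continuous_mult (fun q : pt => snd q) (fun q : pt => b (fst q))).
    apply continuous_snd.
    apply continuous_comp. apply continuous_fst. apply Sm_cont; auto.
Qed.

Lemma Fm_cont : forall p e, 0 < e -> exists d, 0 < d /\
  forall q, inbox p d q -> inbox (Fm (fst p) (snd p)) e (Fm (fst q) (snd q)).
Proof.
  intros p e He.
  destruct (cont_contc _ p (Fm_comp_cont g1 n1 p Hg1 Hn1) e He) as [d1 [Hd1 H1]].
  destruct (cont_contc _ p (Fm_comp_cont g2 n2 p Hg2 Hn2) e He) as [d2 [Hd2 H2]].
  exists (Rmin d1 d2). split. apply Rmin_pos; auto.
  intros q Hq. split; simpl.
  - apply H1. eapply inbox_sub; [|exact Hq]. apply Rmin_l.
  - apply H2. eapply inbox_sub; [|exact Hq]. apply Rmin_r.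
Qed.

Lemma Wm_boxed : forall p, Wm p -> boxed Wm p.
Proof.
  intros p Hp. destruct (open2_boxed O _ HO Hp) as [e [He HB]].
  destruct (Fm_cont p e He) as [d [Hd H]].
  exists d. split. auto. intros q Hq. apply HB. apply H. auto.
Qed.

Lemma Wm_loc : forall p, Wm p -> locally p Wm.
Proof.
  intros p Hp. apply locally_inbox. apply Wm_boxed. auto.
Qed.

Lemma Wm_loc_t : forall p, Wm p -> locally (fst p) (fun x => Wm (x, snd p)).
Proof.
  intros p Hp. destruct (Wm_boxed p Hp) as [d [Hd H]].
  apply (locR _ _ d Hd). intros y Hy. apply H. split; simpl; auto.
  rewrite Rminus_diag, Rabs_R0; auto.
Qed.

Lemma Wm_loc_e : forall p, Wm p -> locally (snd p) (fun y => Wm (fst p, y)).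
Proof.
  intros p Hp. destruct (Wm_boxed p Hp) as [d [Hd H]].
  apply (locR _ _ d Hd). intros y Hy. apply H. split; simpl; auto.
  rewrite Rminus_diag, Rabs_R0; auto.
Qed.

Lemma chain_t : forall w x y, Wm (x, y) ->
  is_derive (fun t => ipd w f (Fm t y)) x
    (ipd (true :: w) f (Fm x y) * (Derive g1 x + y * Derive n1 x)
     + ipd (false :: w) f (Fm x y) * (Derive g2 x + y * Derive n2 x)).
Proof.
  intros w x y H.
  apply (CR (ipd w f) (Fm x y) (smooth_C1at O f w _ HO Hf H)
    (fun t => g1 t + y * n1 t) (fun t => g2 t + y * n2 t)); auto.
  - apply isd_plus. apply Derive_correct, Sm_ex; auto.
    apply isd_eq with (0 * n1 x + y * Derive n1 x). apply isd_mult. apply isd_const.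
    apply Derive_correct, Sm_ex; auto. ring.
  - apply isd_plus. apply Derive_correct, Sm_ex; auto.
    apply isd_eq with (0 * n2 x + y * Derive n2 x). apply isd_mult. apply isd_const.
    apply Derive_correct, Sm_ex; auto. ring.
Qed.

Lemma chain_e : forall w x y, Wm (x, y) ->
  is_derive (fun t => ipd w f (Fm x t)) y
    (ipd (true :: w) f (Fm x y) * n1 x + ipd (false :: w) f (Fm x y) * n2 x).
Proof.
  intros w x y H.
  apply (CR (ipd w f) (Fm x y) (smooth_C1at O f w _ HO Hf H)
    (fun t => g1 x + t * n1 x) (fun t => g2 x + t * n2 x)); auto.
  - apply isd_eq with (0 + (1 * n1 x + y * 0)). apply isd_plus. apply isd_const.
    apply (isd_mult (fun t => t) (fun _ => n1 x)). apply isd_id. apply isd_const. ring.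
  - apply isd_eq with (0 + (1 * n2 x + y * 0)). apply isd_plus. apply isd_const.
    apply (isd_mult (fun t => t) (fun _ => n2 x)). apply isd_id. apply isd_const. ring.
Qed.

Definition term := ((R -> R) * nat * list bool)%type.

Definition evalT (tm : term) (p : pt) : R :=
  let '(c, k, w) := tm in c (fst p) * snd p ^ k * ipd w f (Fm (fst p) (snd p)).

Definition evalL (l : list term) (p : pt) : R :=
  fold_right (fun tm acc => evalT tm p + acc) 0 l.

Definition dT (b : bool) (tm : term) : list term :=
  let '(c, k, w) := tm in
  if b then
    (Derive c, k, w) :: (fun x => c x * Derive g1 x, k, true :: w)
    :: (fun x => c x * Derive n1 x, S k, true :: w)
    :: (fun x => c x * Derive g2 x, k, false :: w)
    :: (fun x => c x * Derive n2 x, S k, false :: w) :: nil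
  else
    (fun x => c x * INR k, pred k, w) :: (fun x => c x * n1 x, k, true :: w)
    :: (fun x => c x * n2 x, k, false :: w) :: nil.

Definition dL (b : bool) (l : list term) : list term := flat_map (dT b) l.

Definition allSm (l : list term) : Prop := List.Forall (fun tm => Sm (fst (fst tm))) l.

Lemma allSm_dL : forall b l, allSm l -> allSm (dL b l).
Proof.
  intros b l H. unfold dL. induction H as [|[[c k] w] l Hc Hl IH]; simpl. constructor.
  apply Forall_app. split; auto. simpl in Hc.
  destruct b.
  - apply Forall_cons; [exact (Sm_Derive c Hc)|].
    apply Forall_cons; [exact (Sm_mult _ _ Hc (Sm_Derive _ Hg1))|].
    apply Forall_cons; [exact (Sm_mult _ _ Hc (Sm_Derive _ Hn1))|].
    apply Forall_cons; [exact (Sm_mult _ _ Hc (Sm_Derive _ Hg2))|].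
    apply Forall_cons; [exact (Sm_mult _ _ Hc (Sm_Derive _ Hn2))|].
    apply Forall_nil.
  - apply Forall_cons; [exact (Sm_mult _ _ Hc (Sm_const _))|].
    apply Forall_cons; [exact (Sm_mult _ _ Hc Hn1)|].
    apply Forall_cons; [exact (Sm_mult _ _ Hc Hn2)|].
    apply Forall_nil.
Qed.

Lemma evalL_app : forall l1 l2 p, evalL (l1 ++ l2) p = evalL l1 p + evalL l2 p.
Proof. induction l1; intros; simpl. ring. rewrite IHl1. ring. Qed.

Lemma evalT_deriv_t : forall tm x y, Sm (fst (fst tm)) -> Wm (x, y) ->
  is_derive (fun t => evalT tm (t, y)) x (evalL (dT true tm) (x, y)).
Proof.
  intros [[c k] w] x y Hc H. simpl in Hc. simpl.
  eapply isd_eq.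
  apply isd_mult. apply isd_mult. apply Derive_correct, Sm_ex; auto. apply isd_const.
  apply chain_t; auto.
  simpl. ring.
Qed.

Lemma evalT_deriv_e : forall tm x y, Sm (fst (fst tm)) -> Wm (x, y) ->
  is_derive (fun t => evalT tm (x, t)) y (evalL (dT false tm) (x, y)).
Proof.
  intros [[c k] w] x y Hc H. simpl in Hc. simpl.
  eapply isd_eq.
  apply isd_mult. apply isd_mult. apply isd_const.
  apply (is_derive_pow (fun t => t) k y 1). apply isd_id.
  apply chain_e; auto.
  simpl. ring.
Qed.

Lemma evalL_deriv_t : forall l x y, allSm l -> Wm (x, y) ->
  is_derive (fun t => evalL l (t, y)) x (evalL (dL true l) (x, y)).
Proof.
  induction l as [|tm l IH]; intros x y Hl H; simpl.
  - apply isd_const.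
  - inversion Hl; subst. rewrite evalL_app.
    apply isd_plus. apply evalT_deriv_t; auto. apply IH; auto.
Qed.

Lemma evalL_deriv_e : forall l x y, allSm l -> Wm (x, y) ->
  is_derive (fun t => evalL l (x, t)) y (evalL (dL false l) (x, y)).
Proof.
  induction l as [|tm l IH]; intros x y Hl H; simpl.
  - apply isd_const.
  - inversion Hl; subst. rewrite evalL_app.
    apply isd_plus. apply evalT_deriv_e; auto. apply IH; auto.
Qed.

Lemma evalL_cont : forall l p, allSm l -> Wm p -> continuous (evalL l) p.
Proof.
  induction l as [|[[c k] w] l IH]; intros p Hl H; simpl.
  - apply continuous_const.
  - inversion Hl; subst. simpl in H2.
    apply (continuous_plus (evalT (c, k, w)) (evalL l)); [|apply IH; auto].
    simpl.
    apply (continuous_mult (fun q : pt => c (fst q) * snd q ^ k) (fun q : pt => ipd w f (Fm (fst q) (snd q)))).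
    + apply (continuous_mult (fun q : pt => c (fst q)) (fun q : pt => snd q ^ k)).
      * destruct p. apply continuous_comp. apply continuous_fst. apply Sm_cont; auto.
      * destruct p. apply (continuous_comp snd (fun t => t ^ k)). apply continuous_snd.
        apply (ex_derive_continuous (K:=R_AbsRing) (V:=R_NormedModule)). eexists. apply (is_derive_pow (fun t => t) k _ 1). apply isd_id.
    + apply (continuous_comp (fun q : pt => Fm (fst q) (snd q)) (ipd w f)).
      * intros P HP. apply locally_inbox in HP. destruct HP as [e [He HP]].
        destruct (Fm_cont p e He) as [d [Hd Hq]].
        apply locally_inbox. exists d. split; auto.
      * apply (smooth_cont O f w _ Hf H).
Qed.

Definition Um (p : pt) : R := f (Fm (fst p) (snd p)).

Lemma ipd_Um : forall v, exists l, allSm l /\ forall p, Wm p -> ipd v Um p = evalL l p.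
Proof.
  induction v as [|b v IH].
  - exists ((fun _ => 1, 0%nat, nil) :: nil). split. apply Forall_cons; [exact (Sm_const 1)| apply Forall_nil].
    intros p _. simpl. unfold Um. ring.
  - destruct IH as [l [Hl E]]. exists (dL b l). split. apply allSm_dL; auto.
    intros [x y] H. simpl. destruct b; unfold pd; simpl.
    + rewrite (Derive_ext_loc _ (fun t => evalL l (t, y))).
      apply is_derive_unique. apply evalL_deriv_t; auto.
      generalize (Wm_loc_t (x, y) H). apply filter_imp. intros t Ht. apply E. auto.
    + rewrite (Derive_ext_loc _ (fun t => evalL l (x, t))).
      apply is_derive_unique. apply evalL_deriv_e; auto.
      generalize (Wm_loc_e (x, y) H). apply filter_imp. intros t Ht. apply E. auto.
Qed.

Lemma Um_smooth : smooth_on Wm Um.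
Proof.
  intros v p Hp. destruct (ipd_Um v) as [l [Hl E]]. split; [|split].
  - apply continuous_ext_loc with (evalL l).
    generalize (Wm_loc p Hp). apply filter_imp. intros q Hq. symmetry. apply E. auto.
    apply evalL_cont; auto.
  - apply ex_derive_ext_loc with (fun t => evalL l (t, snd p)).
    generalize (Wm_loc_t p Hp). apply filter_imp. intros t Ht. symmetry. apply E. auto.
    eexists. destruct p. apply evalL_deriv_t; auto.
  - apply ex_derive_ext_loc with (fun t => evalL l (fst p, t)).
    generalize (Wm_loc_e p Hp). apply filter_imp. intros t Ht. symmetry. apply E. auto.
    eexists. destruct p. apply evalL_deriv_e; auto.
Qed.

Fixpoint Lv (v : list bool) : list term :=
  match v with nil => (fun _ => 1, 0%nat, nil) :: nil | b :: v' => dL b (Lv v') end.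

Lemma allSm_Lv : forall v, allSm (Lv v).
Proof.
  induction v; simpl. apply Forall_cons; [exact (Sm_const 1)| apply Forall_nil].
  apply allSm_dL; auto.
Qed.

Lemma ipd_Um_Lv : forall v p, Wm p -> ipd v Um p = evalL (Lv v) p.
Proof.
  induction v as [|b v IH].
  - intros p _. simpl. unfold Um. ring.
  - intros [x y] H. simpl. destruct b; unfold pd; simpl.
    + rewrite (Derive_ext_loc _ (fun t => evalL (Lv v) (t, y))).
      apply is_derive_unique. apply evalL_deriv_t; auto. apply allSm_Lv.
      generalize (Wm_loc_t (x, y) H). apply filter_imp. intros t Ht. apply IH. auto.
    + rewrite (Derive_ext_loc _ (fun t => evalL (Lv v) (x, t))).
      apply is_derive_unique. apply evalL_deriv_e; auto. apply allSm_Lv.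
      generalize (Wm_loc_e (x, y) H). apply filter_imp. intros t Ht. apply IH. auto.
Qed.

End Terms.

Definition openb (W : pt -> Prop) : Prop := forall p, W p -> boxed W p.

Lemma ipd_app : forall w1 w2 G, ipd (w1 ++ w2) G = ipd w1 (ipd w2 G).
Proof. induction w1; intros; simpl; [reflexivity| rewrite IHw1; reflexivity]. Qed.

Lemma smooth_ipd : forall W G w, smooth_on W G -> smooth_on W (ipd w G).
Proof. intros W G w H v p Hp. rewrite <- ipd_app. apply H; auto. Qed.

Lemma ipd_local : forall W A B, openb W -> (forall q, W q -> A q = B q) ->
  forall w p, W p -> ipd w A p = ipd w B p.
Proof.
  intros W A B HW E w. induction w as [|b w IH]; intros p Hp; simpl. auto.
  destruct (HW p Hp) as [d [Hd Hb]].
  destruct b; unfold pd; apply Derive_ext_loc; apply (locR _ _ d Hd); intros y Hy; apply IH; apply Hb;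
  split; simpl; auto; rewrite Rminus_diag, Rabs_R0; auto.
Qed.

Lemma schwarz_pt : forall W G p, openb W -> smooth_on W G -> W p ->
  pd true (pd false G) p = pd false (pd true G) p.
Proof.
  intros W G [x y] HW HG Hp.
  destruct (HW _ Hp) as [d [Hd Hb]].
  unfold pd; simpl.
  apply (Schwarz (fun a b => G (a, b))).
  - exists (mkposreal d Hd). intros u v Hu Hv. simpl in Hu, Hv.
    assert (Hq : W (u, v)) by (apply Hb; split; simpl; auto).
    destruct (HG nil (u, v) Hq) as [_ [A1 A2]].
    destruct (HG (false :: nil) (u, v) Hq) as [_ [B1 B2]].
    destruct (HG (true :: nil) (u, v) Hq) as [_ [C1 C2]].
    simpl in *. repeat split; auto.
  - apply continuity_2d_pt_filterlim.
    destruct (HG (true :: false :: nil) (x, y) Hp) as [Hc _].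
    eapply filterlim_ext; [|exact Hc]. intros [a b]. reflexivity.
  - apply continuity_2d_pt_filterlim.
    destruct (HG (false :: true :: nil) (x, y) Hp) as [Hc _].
    eapply filterlim_ext; [|exact Hc]. intros [a b]. reflexivity.
Qed.

Lemma swap_ft : forall W G w1 w2 p, openb W -> smooth_on W G -> W p ->
  ipd (w1 ++ false :: true :: w2) G p = ipd (w1 ++ true :: false :: w2) G p.
Proof.
  intros W G w1 w2 p HW HG Hp. rewrite !ipd_app.
  apply (ipd_local W); auto. intros q Hq. simpl.
  symmetry. apply (schwarz_pt W); auto. apply smooth_ipd; auto.
Qed.

Lemma move_true : forall W G, openb W -> smooth_on W G -> forall a w p, W p ->
  ipd (repeat false a ++ true :: w) G p = ipd (true :: repeat false a ++ w) G p.
Proof.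
  intros W G HW HG. induction a; intros w p Hp. reflexivity.
  simpl.
  transitivity (ipd (false :: true :: repeat false a ++ w) G p).
  - change (ipd (false :: nil) (ipd (repeat false a ++ true :: w) G) p =
            ipd (false :: nil) (ipd (true :: repeat false a ++ w) G) p).
    apply (ipd_local W); auto.
  - apply (swap_ft W G nil); auto.
Qed.

Section Curv.
Variables g1 g2 : R -> R.
Hypothesis Hg1 : Sm g1.
Hypothesis Hg2 : Sm g2.
Hypothesis Hunit : forall t, Derive g1 t ^ 2 + Derive g2 t ^ 2 = 1.
Variable sg : R.
Hypothesis Hsg : sg = 1 \/ sg = -1.

Lemma SD1 : Sm (Derive g1). Proof. exact (Sm_Derive _ Hg1). Qed.
Lemma SD2 : Sm (Derive g2). Proof. exact (Sm_Derive _ Hg2). Qed.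
Lemma SDD1 : Sm (Derive (Derive g1)). Proof. exact (Sm_Derive _ SD1). Qed.
Lemma SDD2 : Sm (Derive (Derive g2)). Proof. exact (Sm_Derive _ SD2). Qed.

Definition nn1 (x : R) : R := sg * - Derive g2 x.
Definition nn2 (x : R) : R := sg * Derive g1 x.

Lemma Sm_nn1 : Sm nn1.
Proof. unfold nn1. apply Sm_mult. apply Sm_const. apply Sm_opp. exact SD2. Qed.
Lemma Sm_nn2 : Sm nn2.
Proof. unfold nn2. apply Sm_mult. apply Sm_const. exact SD1. Qed.

Lemma exD : forall c x, Sm c -> ex_derive c x.
Proof. intros. apply Sm_ex; auto. Qed.

Lemma Dnn1 : forall x, Derive nn1 x = sg * - Derive (Derive g2) x.
Proof.
  intros x. apply is_derive_unique. unfold nn1.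
  apply isd_eq with (0 * - Derive g2 x + sg * - Derive (Derive g2) x).
  apply (isd_mult (fun _ => sg) (fun x => - Derive g2 x)). apply isd_const.
  apply (is_derive_opp (Derive g2)). apply Derive_correct. apply exD. exact SD2.
  ring.
Qed.

Lemma Dnn2 : forall x, Derive nn2 x = sg * Derive (Derive g1) x.
Proof.
  intros x. apply is_derive_unique. unfold nn2.
  apply isd_eq with (0 * Derive g1 x + sg * Derive (Derive g1) x).
  apply (isd_mult (fun _ => sg) (fun x => Derive g1 x)). apply isd_const.
  apply Derive_correct. apply exD. exact SD1.
  ring.
Qed.

Lemma DDnn1 : forall x, Derive (Derive nn1) x = sg * - Derive (Derive (Derive g2)) x.
Proof.
  intros x. rewrite (Derive_ext _ (fun x => sg * - Derive (Derive g2) x)) by apply Dnn1.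
  apply is_derive_unique.
  apply isd_eq with (0 * - Derive (Derive g2) x + sg * - Derive (Derive (Derive g2)) x).
  apply (isd_mult (fun _ => sg) (fun x => - Derive (Derive g2) x)). apply isd_const.
  apply (is_derive_opp (Derive (Derive g2))). apply Derive_correct. apply exD. exact SDD2.
  ring.
Qed.

Lemma DDnn2 : forall x, Derive (Derive nn2) x = sg * Derive (Derive (Derive g1)) x.
Proof.
  intros x. rewrite (Derive_ext _ (fun x => sg * Derive (Derive g1) x)) by apply Dnn2.
  apply is_derive_unique.
  apply isd_eq with (0 * Derive (Derive g1) x + sg * Derive (Derive (Derive g1)) x).
  apply (isd_mult (fun _ => sg) (fun x => Derive (Derive g1) x)). apply isd_const.
  apply Derive_correct. apply exD. exact SDD1.
  ring.
Qed.

Lemma Rel2 : forall t, Derive g1 t * Derive (Derive g1) t + Derive g2 t * Derive (Derive g2) t = 0.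
Proof.
  intros t.
  assert (H1 : is_derive (fun x => Derive g1 x * Derive g1 x + Derive g2 x * Derive g2 x) t
     (Derive (Derive g1) t * Derive g1 t + Derive g1 t * Derive (Derive g1) t +
      (Derive (Derive g2) t * Derive g2 t + Derive g2 t * Derive (Derive g2) t))).
  { apply isd_plus; apply isd_mult; apply Derive_correct; apply exD;
    first [exact SD1 | exact SD2]. }
  assert (H2 : is_derive (fun x => Derive g1 x * Derive g1 x + Derive g2 x * Derive g2 x) t 0).
  { apply (is_derive_ext (fun _ => 1)). 2: apply isd_const. intros x. cbv beta. rewrite <- (Hunit x). simpl pow. rewrite !Rmult_1_r. reflexivity. }
  apply is_derive_unique in H1. apply is_derive_unique in H2. rewrite H1 in H2. lra.
Qed.

Lemma Rel3 : forall t, Derive (Derive g1) t * Derive (Derive g1) t + Derive (Derive g2) t * Derive (Derive g2) t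
   + Derive g1 t * Derive (Derive (Derive g1)) t + Derive g2 t * Derive (Derive (Derive g2)) t = 0.
Proof.
  intros t.
  assert (H1 : is_derive (fun x => Derive g1 x * Derive (Derive g1) x + Derive g2 x * Derive (Derive g2) x) t
     (Derive (Derive g1) t * Derive (Derive g1) t + Derive g1 t * Derive (Derive (Derive g1)) t +
      (Derive (Derive g2) t * Derive (Derive g2) t + Derive g2 t * Derive (Derive (Derive g2)) t))).
  { apply isd_plus; apply isd_mult; apply Derive_correct; apply exD;
    first [exact SD1 | exact SD2 | exact SDD1 | exact SDD2]. }
  assert (H2 : is_derive (fun x => Derive g1 x * Derive (Derive g1) x + Derive g2 x * Derive (Derive g2) x) t 0).
  { apply (is_derive_ext (fun _ => 0)). 2: apply isd_const. intros x. rewrite Rel2. auto. }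
  apply is_derive_unique in H1. apply is_derive_unique in H2. rewrite H1 in H2. lra.
Qed.

Definition kap (t : R) : R := Derive g1 t * Derive (Derive g2) t - Derive g2 t * Derive (Derive g1) t.
Definition kap' (t : R) : R :=
  Derive g1 t * Derive (Derive (Derive g2)) t - Derive g2 t * Derive (Derive (Derive g1)) t.

Variable f : pt -> R.
Variable O : pt -> Prop.
Hypothesis HO : open2 O.
Hypothesis Hf : smooth_on O f.
Variables alpha kk : R.

Definition UU := Um g1 g2 nn1 nn2 f.
Definition WW := Wm g1 g2 nn1 nn2 O.

Lemma curv_id : forall x y, WW (x, y) ->
  alpha * lap f (Fm g1 g2 nn1 nn2 x y) + kk ^ 2 * f (Fm g1 g2 nn1 nn2 x y) = 0 ->
  let h := 1 - sg * kap x * y in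
  alpha * h ^ 3 * ipd (false :: false :: nil) UU (x, y) + kk ^ 2 * h ^ 3 * UU (x, y)
  + alpha * h * ipd (true :: true :: nil) UU (x, y)
  - alpha * (- sg * kap' x * y) * ipd (true :: nil) UU (x, y)
  - alpha * sg * kap x * h ^ 2 * ipd (false :: nil) UU (x, y) = 0.
Proof.
  intros x y HW Hpde h.
  assert (E0 : UU (x, y) = ipd nil UU (x, y)) by reflexivity.
  rewrite E0.
  unfold UU. rewrite !(ipd_Um_Lv g1 g2 nn1 nn2 Hg1 Hg2 Sm_nn1 Sm_nn2 f O HO Hf) by exact HW.
  cbn -[Derive pow ipd INR kap kap'].
  change (INR 0) with 0.
  rewrite !(Derive_ext (Derive (fun _ : R => 1)) (fun _ => 0)) by (intros; apply Derive_const).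
  rewrite !Derive_const.
  rewrite (Derive_ext (fun x0 : R => 1 * Derive g1 x0) (Derive g1)) by (intros; ring).
  rewrite (Derive_ext (fun x0 : R => 1 * Derive g2 x0) (Derive g2)) by (intros; ring).
  rewrite (Derive_ext (fun x0 : R => 1 * Derive nn1 x0) (Derive nn1)) by (intros; ring).
  rewrite (Derive_ext (fun x0 : R => 1 * Derive nn2 x0) (Derive nn2)) by (intros; ring).
  rewrite DDnn1, DDnn2, !Dnn1, !Dnn2.
  unfold lap, pd in Hpde.
  change (alpha * (ipd (true :: true :: nil) f (Fm g1 g2 nn1 nn2 x y) + ipd (false :: false :: nil) f (Fm g1 g2 nn1 nn2 x y)) + kk ^ 2 * ipd nil f (Fm g1 g2 nn1 nn2 x y) = 0) in Hpde.
  set (F := Fm g1 g2 nn1 nn2 x y) in *.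
  unfold nn1, nn2.
  assert (R1 := Hunit x). assert (R2 := Rel2 x). assert (R3 := Rel3 x).
  assert (EK : kap x = Derive g1 x * Derive (Derive g2) x - Derive g2 x * Derive (Derive g1) x) by reflexivity.
  assert (EK' : kap' x = Derive g1 x * Derive (Derive (Derive g2)) x - Derive g2 x * Derive (Derive (Derive g1)) x) by reflexivity.
  unfold h. clearbody h.
  set (K := kap x) in *. set (K' := kap' x) in *.
  set (a1 := Derive g1 x) in *. set (a2 := Derive g2 x) in *.
  set (b1 := Derive (Derive g1) x) in *. set (b2 := Derive (Derive g2) x) in *.
  set (c1 := Derive (Derive (Derive g1)) x) in *. set (c2 := Derive (Derive (Derive g2)) x) in *.
  set (f0 := ipd nil f F) in *. set (fx := ipd (true :: nil) f F) in *. set (fy := ipd (false :: nil) f F) in *.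
  set (fxx := ipd (true :: true :: nil) f F) in *. set (fyy := ipd (false :: false :: nil) f F) in *.
  set (fxy := ipd (true :: false :: nil) f F) in *. set (fyx := ipd (false :: true :: nil) f F) in *.
  clearbody K K' a1 a2 b1 b2 c1 c2 f0 fx fy fxx fyy fxy fyx.
  assert (Hb1 : b1 = - K * a2).
  { assert (Z : b1 + (a1 * b2 - a2 * b1) * a2 = a1 * (a1 * b1 + a2 * b2) + b1 * (1 - (a1 ^ 2 + a2 ^ 2))) by ring.
    rewrite R2, R1 in Z. rewrite EK. lra. }
  assert (Hb2 : b2 = K * a1).
  { assert (Z : b2 - (a1 * b2 - a2 * b1) * a1 = a2 * (a1 * b1 + a2 * b2) + b2 * (1 - (a1 ^ 2 + a2 ^ 2))) by ring.
    rewrite R2, R1 in Z. rewrite EK. lra. }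
  rewrite Hb1, Hb2 in R3.
  assert (Hc1 : c1 = - K' * a2 - K ^ 2 * a1).
  { assert (Z : c1 + (a1 * c2 - a2 * c1) * a2 + K ^ 2 * a1 =
       a1 * ((- K * a2) * (- K * a2) + (K * a1) * (K * a1) + a1 * c1 + a2 * c2)
       + c1 * (1 - (a1 ^ 2 + a2 ^ 2)) + K ^ 2 * a1 * (1 - (a1 ^ 2 + a2 ^ 2))) by ring.
    rewrite R3, R1 in Z. rewrite EK'. lra. }
  assert (Hc2 : c2 = K' * a1 - K ^ 2 * a2).
  { assert (Z : c2 - (a1 * c2 - a2 * c1) * a1 + K ^ 2 * a2 =
       a2 * ((- K * a2) * (- K * a2) + (K * a1) * (K * a1) + a1 * c1 + a2 * c2)
       + c2 * (1 - (a1 ^ 2 + a2 ^ 2)) + K ^ 2 * a2 * (1 - (a1 ^ 2 + a2 ^ 2))) by ring.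
    rewrite R3, R1 in Z. rewrite EK'. lra. }
  rewrite Hb1, Hb2, Hc1, Hc2.
  clear EK EK' Hb1 Hb2 Hc1 Hc2 R2 R3.
  destruct Hsg as [-> | ->].
  - transitivity ((1 - 1 * K * y) ^ 3 * (alpha * (a1 ^ 2 + a2 ^ 2) * (fxx + fyy) + kk ^ 2 * f0)); [ring|].
    rewrite R1. rewrite Rmult_1_r, Hpde. ring.
  - transitivity ((1 - (-1) * K * y) ^ 3 * (alpha * (a1 ^ 2 + a2 ^ 2) * (fxx + fyy) + kk ^ 2 * f0)); [ring|].
    rewrite R1. rewrite Rmult_1_r, Hpde. ring.
Qed.

End Curv.

Lemma Dn_eta : forall G w j x y,
  Derive_n (fun t => ipd w G (x, t)) j y = ipd (repeat false j ++ w) G (x, y).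
Proof.
  intros G w j x. induction j; intros y. reflexivity.
  simpl. unfold pd. simpl. apply Derive_ext. intros t. apply IHj.
Qed.

Lemma Dn_t : forall G w j x y,
  Derive_n (fun t => ipd w G (t, y)) j x = ipd (repeat true j ++ w) G (x, y).
Proof.
  intros G w j x y. revert x. induction j; intros x. reflexivity.
  simpl. unfold pd. simpl. apply Derive_ext. intros t. apply IHj.
Qed.

Definition SmN (H : R -> R) (d : R) : Prop :=
  0 < d /\ forall n y, Rabs y < d -> ex_derive (Derive_n H n) y.

Lemma locY : forall d y, Rabs y < d -> locally y (fun z => Rabs z < d).
Proof.
  intros d y Hy. apply (locR _ _ (d - Rabs y)). lra.
  intros z Hz. pose proof (Rabs_triang_inv z y). 
  assert (Rabs z - Rabs y <= Rabs (z - y)) by (apply Rabs_triang_inv). lra.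
Qed.


Lemma SmN_loc : forall H d n y, SmN H d -> Rabs y < d ->
  locally y (fun z => forall k, (k <= n)%nat -> ex_derive_n H k z).
Proof.
  intros H d n y [Hd HH] Hy. generalize (locY d y Hy). apply filter_imp.
  intros z Hz [|k] _; simpl; auto.
Qed.

Lemma cont1 : forall (h : R -> R) x, continuous h x -> forall eps, 0 < eps ->
  exists del, 0 < del /\ forall y, Rabs (y - x) < del -> Rabs (h y - h x) < eps.
Proof.
  intros h x Hc eps He.
  assert (Hl : locally (h x) (ball (h x) eps)).
  { exists (mkposreal eps He). intros y Hy; exact Hy. }
  destruct (Hc _ Hl) as [d Hd]. exists d. split. apply cond_pos.
  intros y Hy. apply (Hd y Hy).
Qed.

Lemma SmN_plus : forall H1 H2 d, SmN H1 d -> SmN H2 d ->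
  SmN (fun t => H1 t + H2 t) d /\
  forall n y, Rabs y < d -> Derive_n (fun t => H1 t + H2 t) n y = Derive_n H1 n y + Derive_n H2 n y.
Proof.
  intros H1 H2 d S1 S2.
  assert (E : forall n y, Rabs y < d -> Derive_n (fun t => H1 t + H2 t) n y = Derive_n H1 n y + Derive_n H2 n y).
  { intros n y Hy. apply Derive_n_plus; eapply SmN_loc; eauto. }
  split; auto. split. apply S1.
  intros n y Hy.
  apply ex_derive_ext_loc with (fun t => Derive_n H1 n t + Derive_n H2 n t).
  generalize (locY d y Hy). apply filter_imp. intros z Hz. symmetry. apply E; auto.
  apply (ex_derive_plus (Derive_n H1 n) (Derive_n H2 n)). apply S1; auto. apply S2; auto.
Qed.

Lemma SmN_scal : forall H d a, SmN H d -> SmN (fun t => a * H t) d.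
Proof.
  intros H d a [Hd SS]. split; auto. intros n y Hy.
  apply ex_derive_ext with (fun t => a * Derive_n H n t).
  intros t. symmetry. apply Derive_n_scal_l.
  apply ex_derive_scal. apply SS; auto.
Qed.

Lemma mulY_aux : forall H d, SmN H d -> forall m y, Rabs y < d ->
  Derive_n (fun t => t * H t) (S m) y = y * Derive_n H (S m) y + INR (S m) * Derive_n H m y.
Proof.
  intros H d [Hd SS]. induction m; intros y Hy.
  - change (Derive (fun t => t * H t) y = y * Derive H y + 1 * H y).
    rewrite Derive_mult. rewrite Derive_id. ring.
    apply ex_derive_id. apply (SS 0%nat y Hy).
  - change (Derive (Derive_n (fun t => t * H t) (S m)) y = y * Derive_n H (S (S m)) y + INR (S (S m)) * Derive_n H (S m) y).
    rewrite (Derive_ext_loc _ (fun z => z * Derive_n H (S m) z + INR (S m) * Derive_n H m z)).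
    2:{ generalize (locY d y Hy). apply filter_imp. intros z Hz. apply IHm; auto. }
    rewrite Derive_plus. rewrite Derive_mult. rewrite Derive_id. rewrite Derive_scal.
    rewrite !S_INR. simpl. ring.
    apply ex_derive_id. apply (SS (S m) y Hy).
    apply ex_derive_mult. apply ex_derive_id. apply (SS (S m) y Hy).
    apply ex_derive_scal. apply (SS m y Hy).
Qed.

Lemma mulY_smooth : forall H d, SmN H d -> SmN (fun t => t * H t) d.
Proof.
  intros H d SH. pose proof SH as [Hd SS]. split; auto. intros [|m] y Hy.
  - simpl. apply ex_derive_mult. apply ex_derive_id. apply (SS 0%nat y Hy).
  - apply ex_derive_ext_loc with (fun z => z * Derive_n H (S m) z + INR (S m) * Derive_n H m z).
    generalize (locY d y Hy). apply filter_imp. intros z Hz. symmetry. apply (mulY_aux H d SH); auto.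
    apply (ex_derive_plus (fun z => z * Derive_n H (S m) z) (fun z => INR (S m) * Derive_n H m z)).
    apply ex_derive_mult. apply ex_derive_id. apply (SS (S m) y Hy).
    apply ex_derive_scal. apply (SS m y Hy).
Qed.

Lemma mulY_0 : forall H d, SmN H d -> forall m,
  Derive_n (fun t => t * H t) m 0 = INR m * Derive_n H (pred m) 0.
Proof.
  intros H d SH [|m].
  - simpl. ring.
  - rewrite (mulY_aux H d SH m 0). simpl pred. ring. rewrite Rabs_R0. apply SH.
Qed.

Fixpoint ff (m a : nat) : R :=
  match a with O => 1 | S a' => INR m * ff (pred m) a' end.

Lemma powY : forall a H d, SmN H d -> SmN (fun t => t ^ a * H t) d /\
  forall m, Derive_n (fun t => t ^ a * H t) m 0 = ff m a * Derive_n H (m - a) 0.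
Proof.
  induction a; intros H d SH.
  - split.
    + destruct SH as [Hd SS]. split; auto. intros n y Hy.
      apply ex_derive_ext with (Derive_n H n). intros; apply Derive_n_ext; intros; simpl; ring.
      apply SS; auto.
    + intros m. simpl. rewrite Nat.sub_0_r. rewrite Rmult_1_l. apply Derive_n_ext. intros; ring.
  - destruct (IHa H d SH) as [S1 E1].
    assert (Ext : forall t, t * (t ^ a * H t) = t ^ S a * H t) by (intros; simpl; ring).
    split.
    + destruct (mulY_smooth _ d S1) as [Hd S2]. split; auto. intros n y Hy.
      apply ex_derive_ext with (Derive_n (fun t => t * (t ^ a * H t)) n).
      intros; apply Derive_n_ext; auto. apply S2; auto.
    + intros m. rewrite <- (Derive_n_ext _ _ m 0 Ext).
      rewrite (mulY_0 _ d S1). rewrite E1. simpl ff.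
      replace (pred m - a)%nat with (m - S a)%nat by lia. ring.
Qed.

Section Eta.
Variable G : pt -> R.
Variable W : pt -> Prop.
Hypothesis HW : openb W.
Hypothesis HG : smooth_on W G.
Variable x : R.
Hypothesis Hx : W (x, 0).

Variable dW : R.
Hypothesis dW_pos : 0 < dW.
Hypothesis dW_in : forall q, inbox (x, 0) dW q -> W q.

Lemma W_y : forall y, Rabs y < dW -> W (x, y).
Proof.
  intros y Hy. apply dW_in. split; simpl. rewrite Rminus_diag, Rabs_R0. apply dW_pos.
  rewrite Rminus_0_r. auto.
Qed.

Lemma SmN_G : forall w, SmN (fun y => ipd w G (x, y)) dW.
Proof.
  intros w. split. apply dW_pos. intros n y Hy.
  apply ex_derive_ext with (fun y => ipd (repeat false n ++ w) G (x, y)).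
  intros t. symmetry. apply Dn_eta.
  apply (HG (repeat false n ++ w) (x, y) (W_y y Hy)).
Qed.

Definition PL := list (R * nat * list bool).

Definition evalPL (pl : PL) (y : R) : R :=
  fold_right (fun tm acc => let '(c, a, w) := tm in c * (y ^ a * ipd w G (x, y)) + acc) 0 pl.

Definition DPL (pl : PL) (m : nat) : R :=
  fold_right (fun tm acc => let '(c, a, w) := tm in
     c * (ff m a * ipd (repeat false (m - a) ++ w) G (x, 0)) + acc) 0 pl.

Lemma evalPL_smooth : forall pl, SmN (evalPL pl) dW /\
  forall m, Derive_n (evalPL pl) m 0 = DPL pl m.
Proof.
  induction pl as [|[[c a] w] pl IH].
  - split. split. apply dW_pos. intros n y Hy. simpl.
    destruct n. apply ex_derive_const.
    apply ex_derive_ext with (fun _ => 0). intros; symmetry.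
    rewrite (Derive_n_ext (evalPL nil) (fun _ => 0)) by reflexivity. apply Derive_n_const. apply ex_derive_const.
    intros [|m]. reflexivity.
    rewrite (Derive_n_ext (evalPL nil) (fun _ => 0)) by reflexivity. apply Derive_n_const.
  - destruct IH as [S1 E1].
    destruct (powY a _ dW (SmN_G w)) as [S2 E2].
    pose proof (SmN_scal _ _ c S2) as S3.
    destruct (SmN_plus _ _ dW S3 S1) as [S4 E4].
    split.
    + exact S4.
    + intros m. rewrite (Derive_n_ext (evalPL _) (fun t => c * (t ^ a * ipd w G (x, t)) + evalPL pl t)) by reflexivity.
      rewrite (E4 m 0). rewrite Derive_n_scal_l. rewrite E2, E1.
      rewrite Dn_eta. reflexivity. rewrite Rabs_R0. apply dW_pos.
Qed.

Lemma zero_right : forall H d, SmN H d -> forall d', 0 < d' ->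
  (forall y, 0 < y < d' -> H y = 0) -> forall m, Derive_n H m 0 = 0.
Proof.
  intros H d [Hd SS] d' Hd' Z m.
  assert (Zm : forall y, 0 < y < Rmin d d' -> Derive_n H m y = 0).
  { intros y Hy. assert (Hy1 : y < d) by (pose proof (Rmin_l d d'); lra).
    assert (Hy2 : y < d') by (pose proof (Rmin_r d d'); lra).
    destruct m. simpl. apply Z; lra.
    rewrite (Derive_n_ext_loc H (fun _ => 0)). apply Derive_n_const.
    apply (locR _ _ (Rmin (y) (d' - y))). apply Rmin_pos; lra.
    intros z Hz. apply Z. pose proof (Rmin_l y (d' - y)). pose proof (Rmin_r y (d' - y)).
    apply Rabs_def2 in Hz. lra. }
  assert (Hc : continuous (Derive_n H m) 0).
  { apply (ex_derive_continuous (K:=R_AbsRing) (V:=R_NormedModule)). apply SS. rewrite Rabs_R0; auto. }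
  destruct (Req_dec (Derive_n H m 0) 0) as [E|NE]; auto.
  assert (He : 0 < Rabs (Derive_n H m 0)) by (apply Rabs_pos_lt; auto).
  destruct (cont1 _ _ Hc _ He) as [del [Hdel Hcl]].
  set (y := Rmin del (Rmin d d') / 2).
  assert (Hm : 0 < Rmin d d') by (apply Rmin_pos; auto).
  assert (Hmp := Rmin_pos del (Rmin d d') Hdel Hm).
  assert (Hy0 : 0 < y) by (unfold y; lra).
  assert (Hy1 : y < Rmin d d') by (unfold y; pose proof (Rmin_r del (Rmin d d')); lra).
  assert (Hy2 : y < del) by (unfold y; pose proof (Rmin_l del (Rmin d d')); lra).
  assert (A : Rabs (Derive_n H m y - Derive_n H m 0) < Rabs (Derive_n H m 0)).
  { apply Hcl. rewrite Rminus_0_r, Rabs_right; lra. }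
  rewrite (Zm y) in A by lra. rewrite Rminus_0_l, Rabs_Ropp in A. lra.
Qed.

End Eta.

Lemma rep_false_cons : forall j (w : list bool), repeat false j ++ false :: w = false :: (repeat false j ++ w).
Proof. induction j; intros; simpl; [reflexivity| rewrite IHj; reflexivity]. Qed.

Section Rel.
Variables g1 g2 : R -> R.
Hypothesis Hg1 : Sm g1.
Hypothesis Hg2 : Sm g2.
Hypothesis Hunit : forall t, Derive g1 t ^ 2 + Derive g2 t ^ 2 = 1.
Variable sg : R.
Hypothesis Hsg : sg = 1 \/ sg = -1.
Variable f : pt -> R.
Variable O : pt -> Prop.
Hypothesis HO : open2 O.
Hypothesis Hf : smooth_on O f.
Variables alpha kk : R.

Definition U0 := UU g1 g2 sg f.
Definition W0 := WW g1 g2 sg O.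

Lemma W0_openb : openb W0.
Proof. intros p Hp. apply (Wm_boxed g1 g2 _ _ Hg1 Hg2 (Sm_nn1 g2 Hg2 sg) (Sm_nn2 g1 Hg1 sg) O HO p Hp). Qed.

Lemma U0_smooth : smooth_on W0 U0.
Proof. apply (Um_smooth g1 g2 _ _ Hg1 Hg2 (Sm_nn1 g2 Hg2 sg) (Sm_nn2 g1 Hg1 sg) f O HO Hf). Qed.

Definition gg (j : nat) (z : R) : R := ipd (repeat false j) U0 (z, 0).

Lemma Dn_gg : forall j i z, Derive_n (gg j) i z = ipd (repeat true i ++ repeat false j) U0 (z, 0).
Proof. intros. unfold gg. apply (Dn_t U0 (repeat false j) i z 0). Qed.

Lemma Conv_ff : forall j z, ipd (repeat false j ++ false :: false :: nil) U0 (z, 0) = gg (S (S j)) z.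
Proof. intros. rewrite !rep_false_cons, app_nil_r. reflexivity. Qed.
Lemma Conv_f : forall j z, ipd (repeat false j ++ false :: nil) U0 (z, 0) = gg (S j) z.
Proof. intros. rewrite !rep_false_cons, app_nil_r. reflexivity. Qed.
Lemma Conv_nil : forall j z, ipd (repeat false j ++ nil) U0 (z, 0) = gg j z.
Proof. intros. rewrite app_nil_r. reflexivity. Qed.
Lemma Conv_t : forall j z, W0 (z, 0) -> ipd (repeat false j ++ true :: nil) U0 (z, 0) = Derive_n (gg j) 1 z.
Proof.
  intros j z Hz. rewrite (move_true W0 U0 W0_openb U0_smooth j nil _ Hz).
  rewrite Dn_gg, app_nil_r. reflexivity.
Qed.
Lemma Conv_tt : forall j z, W0 (z, 0) -> ipd (repeat false j ++ true :: true :: nil) U0 (z, 0) = Derive_n (gg j) 2 z.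
Proof.
  intros j z Hz. rewrite (move_true W0 U0 W0_openb U0_smooth j (true :: nil) _ Hz).
  rewrite Dn_gg. simpl.
  change (ipd (true :: nil) (ipd (repeat false j ++ true :: nil) U0) (z, 0) =
          ipd (true :: nil) (ipd (true :: repeat false j) U0) (z, 0)).
  apply (ipd_local W0); auto. apply W0_openb.
  intros q Hq. rewrite (move_true W0 U0 W0_openb U0_smooth j nil _ Hq). rewrite app_nil_r. reflexivity.
Qed.

Lemma rel_eta : forall x m d d', 0 < d -> (forall q, inbox (x, 0) d q -> W0 q) -> 0 < d' ->
  (forall y, 0 < y < d' -> W0 (x, y) /\
     alpha * lap f (Fm g1 g2 (nn1 g2 sg) (nn2 g1 sg) x y) + kk ^ 2 * f (Fm g1 g2 (nn1 g2 sg) (nn2 g1 sg) x y) = 0) ->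
  let cc := - sg * kap g1 g2 x in
  alpha * gg (S (S m)) x
  + 3 * alpha * cc * ff m 1 * gg (S (S (m - 1))) x
  + 3 * alpha * cc ^ 2 * ff m 2 * gg (S (S (m - 2))) x
  + alpha * cc ^ 3 * ff m 3 * gg (S (S (m - 3))) x
  + kk ^ 2 * gg m x
  + 3 * kk ^ 2 * cc * ff m 1 * gg (m - 1) x
  + 3 * kk ^ 2 * cc ^ 2 * ff m 2 * gg (m - 2) x
  + kk ^ 2 * cc ^ 3 * ff m 3 * gg (m - 3) x
  + alpha * Derive_n (gg m) 2 x
  + alpha * cc * ff m 1 * Derive_n (gg (m - 1)) 2 x
  + alpha * sg * kap' g1 g2 x * ff m 1 * Derive_n (gg (m - 1)) 1 x
  - alpha * sg * kap g1 g2 x * gg (S m) x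
  - 2 * alpha * sg * kap g1 g2 x * cc * ff m 1 * gg (S (m - 1)) x
  - alpha * sg * kap g1 g2 x * cc ^ 2 * ff m 2 * gg (S (m - 2)) x = 0.
Proof.
  intros x m d d' Hd Hbox Hd' Hy cc.
  assert (Hx : W0 (x, 0)) by (apply Hbox; apply inbox_center; auto).
  set (ff' := false :: false :: nil). set (tt' := true :: true :: nil).
  set (pl := (alpha, 0%nat, ff') :: (3 * alpha * cc, 1%nat, ff') :: (3 * alpha * cc ^ 2, 2%nat, ff')
          :: (alpha * cc ^ 3, 3%nat, ff')
          :: (kk ^ 2, 0%nat, nil) :: (3 * kk ^ 2 * cc, 1%nat, nil) :: (3 * kk ^ 2 * cc ^ 2, 2%nat, nil)
          :: (kk ^ 2 * cc ^ 3, 3%nat, nil)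
          :: (alpha, 0%nat, tt') :: (alpha * cc, 1%nat, tt')
          :: (alpha * sg * kap' g1 g2 x, 1%nat, true :: nil)
          :: (- alpha * sg * kap g1 g2 x, 0%nat, false :: nil)
          :: (- 2 * alpha * sg * kap g1 g2 x * cc, 1%nat, false :: nil)
          :: (- alpha * sg * kap g1 g2 x * cc ^ 2, 2%nat, false :: nil) :: nil : PL).
  destruct (evalPL_smooth U0 W0 U0_smooth x d Hd Hbox pl) as [S1 E1].
  assert (Z := zero_right _ _ S1 d' Hd').
  assert (HZ : forall y, 0 < y < d' -> evalPL U0 x pl y = 0).
  { intros y Hy'. destruct (Hy y Hy') as [HW Hpde].
    pose proof (curv_id g1 g2 Hg1 Hg2 Hunit sg Hsg f O HO Hf alpha kk x y HW Hpde) as C.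
    cbv zeta in C. change (UU g1 g2 sg f (x, y)) with (ipd nil (UU g1 g2 sg f) (x, y)) in C.
    rewrite <- C. unfold evalPL, pl, ff', tt', cc, U0. cbn [fold_right]. ring. }
  specialize (Z HZ m). rewrite E1 in Z.
  unfold DPL, pl, ff', tt' in Z. cbn [fold_right] in Z.
  rewrite !Conv_ff, !Conv_f, !Conv_nil in Z. rewrite !Conv_tt, !Conv_t in Z by exact Hx.
  rewrite !Nat.sub_0_r in Z.
  change (ff m 0) with 1 in Z.
  rewrite <- Z. ring.
Qed.

End Rel.

Section Main.
Variables g1 g2 : R -> R.
Hypothesis Hg1 : Sm g1.
Hypothesis Hg2 : Sm g2.
Hypothesis Hunit : forall t, Derive g1 t ^ 2 + Derive g2 t ^ 2 = 1.
Variable sg : R.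
Hypothesis Hsg : sg = 1 \/ sg = -1.
Variables alpha kk : R.
Hypothesis Halpha : alpha <> 0.
Variable s : R.

Definition Good (O : pt -> Prop) (f : pt -> R) (x : R) : Prop :=
  (exists d, 0 < d /\ forall q, inbox (x, 0) d q -> W0 g1 g2 sg O q) /\
  (exists d', 0 < d' /\ forall y, 0 < y < d' -> W0 g1 g2 sg O (x, y) /\
     alpha * lap f (Fm g1 g2 (nn1 g2 sg) (nn2 g1 sg) x y) + kk ^ 2 * f (Fm g1 g2 (nn1 g2 sg) (nn2 g1 sg) x y) = 0).

Definition Adm (f : pt -> R) : Prop :=
  exists O, open2 O /\ smooth_on O f /\ exists rho, 0 < rho /\ forall x, Rabs (x - s) < rho -> Good O f x.

Definition GG (f : pt -> R) (j : nat) : R -> R := gg g1 g2 sg f j.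

Lemma Adm_smooth : forall f, Adm f -> exists rho, 0 < rho /\ forall x, Rabs (x - s) < rho ->
  forall j i, ex_derive (Derive_n (GG f j) i) x.
Proof.
  intros f [O [HO [Hf [rho [Hrho HG]]]]]. exists rho. split; auto.
  intros x Hx j i. destruct (HG x Hx) as [[d [Hd Hb]] _].
  assert (Hx0 : W0 g1 g2 sg O (x, 0)) by (apply Hb; apply inbox_center; auto).
  apply ex_derive_ext with (fun z => ipd (repeat true i ++ repeat false j) (U0 g1 g2 sg f) (z, 0)).
  intros z. symmetry. apply Dn_gg.
  apply (U0_smooth g1 g2 Hg1 Hg2 sg f O HO Hf (repeat true i ++ repeat false j) (x, 0) Hx0).
Qed.

Definition RT := ((R -> R) * bool * nat)%type.

Definition evalR (f : pt -> R) (l : list RT) (x : R) : R :=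
  fold_right (fun (t : RT) acc => let '(c, b, j) := t in
     c x * Derive_n (GG f (if b then 1%nat else 0%nat)) j x + acc) 0 l.

Definition okR (K : nat) (l : list RT) : Prop :=
  List.Forall (fun t => Sm (fst (fst t)) /\ (snd t <= K)%nat) l.

Definition Rep (K : nat) (phi : (pt -> R) -> R -> R) : Prop :=
  exists l, okR K l /\ forall f, Adm f -> exists rho, 0 < rho /\
    forall x, Rabs (x - s) < rho -> phi f x = evalR f l x.

Lemma evalR_app : forall f l1 l2 x, evalR f (l1 ++ l2) x = evalR f l1 x + evalR f l2 x.
Proof. induction l1 as [|[[c b] j] l1 IH]; intros; simpl. ring. rewrite IH. ring. Qed.

Lemma okR_app : forall K l1 l2, okR K l1 -> okR K l2 -> okR K (l1 ++ l2).
Proof. intros. apply Forall_app; auto. Qed.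

Lemma Rep_plus : forall K phi psi, Rep K phi -> Rep K psi -> Rep K (fun f x => phi f x + psi f x).
Proof.
  intros K phi psi [l1 [H1 E1]] [l2 [H2 E2]]. exists (l1 ++ l2). split. apply okR_app; auto.
  intros f Hf. destruct (E1 f Hf) as [r1 [Hr1 F1]]. destruct (E2 f Hf) as [r2 [Hr2 F2]].
  exists (Rmin r1 r2). split. apply Rmin_pos; auto.
  intros x Hx. rewrite evalR_app, F1, F2; auto.
  eapply Rlt_le_trans; [exact Hx| apply Rmin_r].
  eapply Rlt_le_trans; [exact Hx| apply Rmin_l].
Qed.

Definition scalR (c : R -> R) (l : list RT) : list RT :=
  map (fun (t : RT) => let '(c', b, j) := t in (fun x => c x * c' x, b, j)) l.

Lemma evalR_scal : forall f c l x, evalR f (scalR c l) x = c x * evalR f l x.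
Proof. induction l as [|[[c' b] j] l IH]; intros; simpl. ring. rewrite IH. ring. Qed.

Lemma Rep_scal : forall K c phi, Sm c -> Rep K phi -> Rep K (fun f x => c x * phi f x).
Proof.
  intros K c phi Hc [l [H E]]. exists (scalR c l). split.
  - clear E. unfold okR, scalR in *. induction H as [|[[c' b] j] l [Hc' Hj] Hl IH]; simpl. constructor.
    constructor; auto. split; auto. apply Sm_mult; auto.
  - intros f Hf. destruct (E f Hf) as [r [Hr F]]. exists r. split; auto.
    intros x Hx. rewrite evalR_scal, F; auto.
Qed.

Lemma Rep_mono : forall K K' phi, (K <= K')%nat -> Rep K phi -> Rep K' phi.
Proof.
  intros K K' phi HK [l [H E]]. exists l. split; auto.
  unfold okR in *. eapply Forall_impl; [|exact H]. intros [[c b] j] [A B]. split; auto. simpl in *. lia.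
Qed.

Lemma Rep_ext_loc : forall K phi psi, Rep K phi ->
  (forall f, Adm f -> exists rho, 0 < rho /\ forall x, Rabs (x - s) < rho -> psi f x = phi f x) ->
  Rep K psi.
Proof.
  intros K phi psi [l [H E]] Hpp. exists l. split; auto.
  intros f Hf. destruct (E f Hf) as [r1 [Hr1 F1]]. destruct (Hpp f Hf) as [r2 [Hr2 F2]].
  exists (Rmin r1 r2). split. apply Rmin_pos; auto.
  intros x Hx. rewrite F2, F1; auto.
  eapply Rlt_le_trans; [exact Hx| apply Rmin_l].
  eapply Rlt_le_trans; [exact Hx| apply Rmin_r].
Qed.

Definition dRl (l : list RT) : list RT :=
  flat_map (fun (t : RT) => let '(c, b, j) := t in (Derive c, b, j) :: (c, b, S j) :: nil) l.

Lemma evalR_deriv : forall f l x, okR 0 (nil) -> List.Forall (fun t => Sm (fst (fst t))) l ->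
  (forall j i, ex_derive (Derive_n (GG f j) i) x) ->
  is_derive (evalR f l) x (evalR f (dRl l) x).
Proof.
  intros f l x _ Hl Hex. induction Hl as [|[[c b] j] l Hc Hl IH]; simpl.
  - apply isd_const.
  - apply (isd_eq _ _ ((Derive c x * Derive_n (GG f (if b then 1%nat else 0%nat)) j x
       + c x * Derive_n (GG f (if b then 1%nat else 0%nat)) (S j) x) + evalR f (dRl l) x)).
    apply isd_plus; auto. apply isd_mult. apply Derive_correct. apply Sm_ex; auto.
    apply Derive_correct. apply Hex.
    simpl. ring.
Qed.

Lemma Rep_deriv : forall K phi, Rep K phi -> Rep (S K) (fun f x => Derive (phi f) x).
Proof.
  intros K phi [l [H E]]. exists (dRl l). split.
  - clear E. unfold okR, dRl in *. induction H as [|[[c b] j] l [Hc Hj] Hl IH]; simpl. constructor.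
    simpl in *.
    constructor. split; [apply Sm_Derive; auto| simpl; lia].
    constructor. split; [auto| simpl; lia]. auto.
  - intros f Hf. destruct (E f Hf) as [r1 [Hr1 F1]]. destruct (Adm_smooth f Hf) as [r2 [Hr2 F2]].
    exists (Rmin r1 r2). split. apply Rmin_pos; auto.
    intros x Hx.
    assert (Hx1 : Rabs (x - s) < r1) by (eapply Rlt_le_trans; [exact Hx| apply Rmin_l]).
    assert (Hx2 : Rabs (x - s) < r2) by (eapply Rlt_le_trans; [exact Hx| apply Rmin_r]).
    rewrite (Derive_ext_loc _ (evalR f l)).
    apply is_derive_unique. apply evalR_deriv. constructor.
    unfold okR in H. eapply Forall_impl; [|exact H]. intros t [A _]; auto.
    apply F2; auto.
    apply (locR _ _ (r1 - Rabs (x - s))). lra.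
    intros z Hz. apply F1.
    replace (z - s) with ((z - x) + (x - s)) by ring.
    eapply Rle_lt_trans. apply Rabs_triang. lra.
Qed.

Lemma Rep_Dn : forall K phi, Rep K phi -> forall i, Rep (i + K) (fun f x => Derive_n (phi f) i x).
Proof.
  intros K phi H. induction i.
  - simpl. eapply Rep_ext_loc; [exact H|]. intros f _. exists 1. split. lra. intros; reflexivity.
  - apply (Rep_deriv _ _ IHi).
Qed.

Definition QT := ((R -> R) * nat * nat)%type.

Definition evalQ (f : pt -> R) (q : list QT) (x : R) : R :=
  fold_right (fun (t : QT) acc => let '(c, m', i') := t in c x * Derive_n (GG f m') i' x + acc) 0 q.

Lemma Rep_Q : forall K n0 q,
  List.Forall (fun t => Sm (fst (fst t)) /\ (snd (fst t) <= n0)%nat /\ (snd t + snd (fst t) <= K)%nat) q ->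
  (forall m', (m' <= n0)%nat -> forall i', Rep (i' + m') (fun f x => Derive_n (GG f m') i' x)) ->
  Rep K (fun f x => evalQ f q x).
Proof.
  intros K n0 q Hq IH. induction Hq as [|[[c m'] i'] q [Hc [Hm Hi]] Hq IHq]; simpl in *.
  - exists nil. split. constructor. intros f _. exists 1. split. lra. intros; reflexivity.
  - apply Rep_plus; auto.
    apply Rep_scal; auto. eapply Rep_mono; [exact Hi|]. apply IH; auto.
Qed.

Lemma Rep_base : forall (b : bool) i, Rep i (fun f x => Derive_n (GG f (if b then 1%nat else 0%nat)) i x).
Proof.
  intros b i. exists ((fun _ => 1, b, i) :: nil). split.
  - constructor; [|constructor]. split. exact (Sm_const 1). simpl; lia.
  - intros f _. exists 1. split. lra. intros x _. simpl. ring.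
Qed.

Definition ccf (z : R) : R := - sg * kap g1 g2 z.

Definition Qm (m : nat) : list QT :=
  (fun z => -(3 * ccf z * ff m 1), (S (S m) - 1)%nat, 0%nat)
  :: (fun z => -(3 * ccf z ^ 2 * ff m 2), (S (S m) - 2)%nat, 0%nat)
  :: (fun z => -(ccf z ^ 3 * ff m 3), (S (S m) - 3)%nat, 0%nat)
  :: (fun _ => -(kk ^ 2 / alpha), m, 0%nat)
  :: (fun z => -(3 * (kk ^ 2 / alpha) * ccf z * ff m 1), (m - 1)%nat, 0%nat)
  :: (fun z => -(3 * (kk ^ 2 / alpha) * ccf z ^ 2 * ff m 2), (m - 2)%nat, 0%nat)
  :: (fun z => -((kk ^ 2 / alpha) * ccf z ^ 3 * ff m 3), (m - 3)%nat, 0%nat)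
  :: (fun _ => -1, m, 2%nat)
  :: (fun z => -(ccf z * ff m 1), (m - 1)%nat, 2%nat)
  :: (fun z => -(sg * kap' g1 g2 z * ff m 1), (m - 1)%nat, 1%nat)
  :: (fun z => sg * kap g1 g2 z, S m, 0%nat)
  :: (fun z => 2 * sg * kap g1 g2 z * ccf z * ff m 1, S (m - 1), 0%nat)
  :: (fun z => sg * kap g1 g2 z * ccf z ^ 2 * ff m 2, S (m - 2), 0%nat) :: nil.

Lemma Sm_kap : Sm (kap g1 g2).
Proof.
  unfold kap. apply (Sm_minus (fun t => Derive g1 t * Derive (Derive g2) t) (fun t => Derive g2 t * Derive (Derive g1) t)).
  apply Sm_mult. exact (SD1 g1 Hg1). exact (SDD2 g2 Hg2).
  apply Sm_mult. exact (SD2 g2 Hg2). exact (SDD1 g1 Hg1).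
Qed.

Lemma Sm_kap' : Sm (kap' g1 g2).
Proof.
  unfold kap'. apply (Sm_minus (fun t => Derive g1 t * Derive (Derive (Derive g2)) t) (fun t => Derive g2 t * Derive (Derive (Derive g1)) t)).
  apply Sm_mult. exact (SD1 g1 Hg1). exact (Sm_Derive _ (SDD2 g2 Hg2)).
  apply Sm_mult. exact (SD2 g2 Hg2). exact (Sm_Derive _ (SDD1 g1 Hg1)).
Qed.

Lemma Sm_ccf : Sm ccf.
Proof. unfold ccf. apply (Sm_mult (fun _ => - sg) (kap g1 g2)). apply Sm_const. exact Sm_kap. Qed.

Lemma Sm_pow : forall c n, Sm c -> Sm (fun z => c z ^ n).
Proof.
  intros c n Hc. induction n.
  - apply (Sm_ext (fun _ => 1)). intros; simpl; auto. apply Sm_const.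
  - apply (Sm_ext (fun z => c z * c z ^ n)). intros; simpl; auto. apply Sm_mult; auto.
Qed.

Ltac smt :=
  match goal with
  | |- Sm (fun _ => ?a) => exact (Sm_const a)
  | |- Sm ccf => exact Sm_ccf
  | |- Sm (fun z => ccf z) => exact Sm_ccf
  | |- Sm (fun z => kap g1 g2 z) => exact Sm_kap
  | |- Sm (fun z => kap' g1 g2 z) => exact Sm_kap'
  | |- Sm (fun z => @?A z ^ ?n) => apply (Sm_pow A n); smt
  | |- Sm (fun z => - @?A z) => apply (Sm_opp A); smt
  | |- Sm (fun z => @?A z * @?B z) => apply (Sm_mult A B); smt
  end.

Lemma Qm_ok : forall m, List.Forall (fun t => Sm (fst (fst t)) /\ (snd (fst t) <= S m)%nat /\ (snd t + snd (fst t) <= S (S m))%nat) (Qm m).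
Proof.
  intros m. unfold Qm.
  repeat (apply Forall_cons; [simpl; split; [smt| split; lia]|]). apply Forall_nil.
Qed.

Lemma Qm_rel : forall m f, Adm f -> exists rho, 0 < rho /\ forall x, Rabs (x - s) < rho ->
  GG f (S (S m)) x = evalQ f (Qm m) x.
Proof.
  intros m f Hf. pose proof Hf as [O [HO [Hsm [rho [Hrho HG]]]]].
  exists rho. split; auto. intros x Hx.
  destruct (HG x Hx) as [[d [Hd Hb]] [d' [Hd' Hy]]].
  pose proof (rel_eta g1 g2 Hg1 Hg2 Hunit sg Hsg f O HO Hsm alpha kk x m d d' Hd Hb Hd' Hy) as Z.
  cbv zeta in Z. unfold GG.
  apply (Rmult_eq_reg_l alpha); auto.
  apply Rminus_diag_uniq.
  rewrite <- Z. unfold evalQ, Qm, ccf. cbn [fold_right Derive_n].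
  unfold GG. destruct m as [|[|[|m]]]; cbn [Nat.sub ff pred] in *; rewrite ?Nat.sub_0_r in *; change (INR 0) with 0 in *; field; auto.
Qed.

Lemma Rep_main : forall n m, (m <= n)%nat -> forall i, Rep (i + m) (fun f x => Derive_n (GG f m) i x).
Proof.
  induction n; intros m Hm i.
  - assert (m = 0%nat) by lia. subst. rewrite Nat.add_0_r. apply (Rep_base false i).
  - destruct (Nat.eq_dec m (S n)) as [->|Hne]; [|apply IHn; lia].
    destruct n as [|m0].
    + replace (i + 1)%nat with (i + 1)%nat by lia. eapply Rep_mono; [|apply (Rep_base true i)]. lia.
    + assert (R0 : Rep (S (S m0)) (fun f x => GG f (S (S m0)) x)).
      { eapply Rep_ext_loc. apply (Rep_Q _ (S m0) (Qm m0)). apply Qm_ok.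
        intros m' Hm' i'. apply IHn. lia.
        intros f Hf. apply Qm_rel; auto. }
      apply (Rep_Dn _ _ R0 i).
Qed.

End Main.

Lemma open_cont : forall (A : pt -> Prop) (p1 p2 : R -> R) c, open2 A ->
  continuous p1 c -> continuous p2 c -> A (p1 c, p2 c) ->
  exists del, 0 < del /\ forall mu, Rabs (mu - c) < del -> A (p1 mu, p2 mu).
Proof.
  intros A p1 p2 c HA H1 H2 Hc. destruct (HA _ Hc) as [e [He HB]].
  assert (He2 : 0 < e / 2) by lra.
  destruct (cont1 p1 c H1 _ He2) as [d1 [Hd1 D1]].
  destruct (cont1 p2 c H2 _ He2) as [d2 [Hd2 D2]].
  exists (Rmin d1 d2). split. apply Rmin_pos; auto.
  intros mu Hmu. apply HB. apply inbox_dist. split; simpl.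
  apply D1. eapply Rlt_le_trans; [exact Hmu| apply Rmin_l].
  apply D2. eapply Rlt_le_trans; [exact Hmu| apply Rmin_r].
Qed.

Lemma conn01 : forall (A B : pt -> Prop) (p1 p2 : R -> R), open2 A -> open2 B ->
  (forall q, A q -> B q -> False) ->
  (forall l, 0 <= l <= 1 -> continuous p1 l /\ continuous p2 l) ->
  (forall l, 0 <= l <= 1 -> A (p1 l, p2 l) \/ B (p1 l, p2 l)) ->
  A (p1 0, p2 0) -> A (p1 1, p2 1).
Proof.
  intros A B p1 p2 HA HB Hdis Hc Hcov H0.
  set (S := fun l => 0 <= l <= 1 /\ forall mu, 0 <= mu <= l -> A (p1 mu, p2 mu)).
  assert (Hb : bound S) by (exists 1; intros l [Hl _]; lra).
  assert (Hne : exists l, S l) by (exists 0; split; [lra| intros mu Hmu; replace mu with 0 by lra; auto]).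
  destruct (completeness S Hb Hne) as [c [Hub Hlub]].
  assert (Hc0 : 0 <= c) by (apply Hub; destruct Hne as [l Hl]; unfold S; split; [lra|]; intros mu Hmu; replace mu with 0 by lra; auto).
  assert (Hc1 : c <= 1) by (apply Hlub; intros l [Hl _]; lra).
  assert (Hbelow : forall mu, 0 <= mu < c -> A (p1 mu, p2 mu)).
  { intros mu Hmu. destruct (classic (exists l, S l /\ mu <= l)) as [[l [[Hl1 Hl2] Hml]]|Hn].
    - apply Hl2. lra.
    - exfalso. assert (c <= mu); [|lra]. apply Hlub. intros l Hl.
      destruct (Rle_dec l mu); auto. exfalso. apply Hn. exists l. split; auto. lra. }
  destruct (Hc c (conj Hc0 Hc1)) as [C1 C2].
  assert (HAc : A (p1 c, p2 c)).
  { destruct (Hcov c (conj Hc0 Hc1)) as [?|HBc]; auto. exfalso.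
    destruct (open_cont B p1 p2 c HB C1 C2 HBc) as [d [Hd HBd]].
    destruct (Req_dec c 0) as [E|NE].
    - apply (Hdis (p1 c, p2 c)); auto. rewrite E; auto.
    - set (mu := Rmax 0 (c - d / 2)).
      assert (Hmu : 0 <= mu < c) by (unfold mu; split; [apply Rmax_l| apply Rmax_lub_lt; lra]).
      apply (Hdis (p1 mu, p2 mu)). apply Hbelow; auto. apply HBd.
      unfold mu. unfold Rmax. destruct (Rle_dec 0 (c - d / 2)); rewrite Rabs_left1; lra. }
  destruct (Req_dec c 1) as [E1|NE1].
  - rewrite <- E1. auto.
  - exfalso. destruct (open_cont A p1 p2 c HA C1 C2 HAc) as [d [Hd HAd]].
    set (l := Rmin 1 (c + d / 2)).
    assert (Hl : c < l) by (unfold l; apply Rmin_glb_lt; lra).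
    assert (S l).
    { split. split. lra. unfold l; apply Rmin_l.
      intros mu Hmu. destruct (Rlt_dec mu c). apply Hbelow; lra.
      apply HAd. assert (l <= c + d / 2) by (unfold l; apply Rmin_r). rewrite Rabs_right; lra. }
    assert (l <= c) by (apply Hub; auto). lra.
Qed.

Lemma closure_of : forall (D : pt -> Prop) p, D p -> closure2 D p.
Proof.
  intros D p Hp eps He. exists p. split; auto. unfold dist2, nrm.
  cbn [fst snd]. assert (E : (fst p - fst p) ^ 2 + (snd p - snd p) ^ 2 = 0) by ring. rewrite E, sqrt_0. lra.
Qed.

Lemma D_Dex_disj : forall (D : pt -> Prop) q, D q -> Dex D q -> False.
Proof. intros D q H1 H2. apply H2. apply closure_of. auto. Qed.

Lemma D_Dex_cover : forall (D : pt -> Prop) q, ~ bdry D q -> D q \/ Dex D q.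
Proof.
  intros D q H. destruct (classic (D q)) as [?|Hn]; auto. right. intros Hc. apply H. split; auto.
Qed.

Lemma nrm_ge_abs1 : forall a b, Rabs a <= sqrt (a ^ 2 + b ^ 2).
Proof.
  intros a b. rewrite <- sqrt_Rsqr_abs. apply sqrt_le_1_alt. unfold Rsqr. nra.
Qed.

Lemma nrm_ge_abs2 : forall a b, Rabs b <= sqrt (a ^ 2 + b ^ 2).
Proof.
  intros a b. rewrite <- sqrt_Rsqr_abs. apply sqrt_le_1_alt. unfold Rsqr. nra.
Qed.

Lemma dist2_sym : forall p q, dist2 p q = dist2 q p.
Proof. intros. unfold dist2, nrm. simpl. f_equal. ring. Qed.

Lemma dist_tri_aux : forall a b c d, sqrt ((a + c) ^ 2 + (b + d) ^ 2) <= sqrt (a ^ 2 + b ^ 2) + sqrt (c ^ 2 + d ^ 2).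
Proof.
  intros a b c d.
  assert (H1 := sqrt_pos (a ^ 2 + b ^ 2)). assert (H2 := sqrt_pos (c ^ 2 + d ^ 2)).
  rewrite <- (sqrt_pow2 (sqrt (a ^ 2 + b ^ 2) + sqrt (c ^ 2 + d ^ 2))) by lra.
  apply sqrt_le_1_alt.
  assert (E1 : sqrt (a ^ 2 + b ^ 2) ^ 2 = a ^ 2 + b ^ 2) by (apply pow2_sqrt; nra).
  assert (E2 : sqrt (c ^ 2 + d ^ 2) ^ 2 = c ^ 2 + d ^ 2) by (apply pow2_sqrt; nra).
  assert (CS : a * c + b * d <= sqrt (a ^ 2 + b ^ 2) * sqrt (c ^ 2 + d ^ 2)).
  { rewrite <- sqrt_mult by nra.
    destruct (Rle_dec (a * c + b * d) 0). pose proof (sqrt_pos ((a ^ 2 + b ^ 2) * (c ^ 2 + d ^ 2))); lra.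
    rewrite <- (sqrt_pow2 (a * c + b * d)) by lra. apply sqrt_le_1_alt.
    assert (0 <= (a * d - b * c) ^ 2) by apply pow2_ge_0. nra. }
  nra.
Qed.

Lemma dist2_tri : forall p q r, dist2 p r <= dist2 p q + dist2 q r.
Proof.
  intros p q r. unfold dist2, nrm. simpl.
  replace (fst p - fst r) with ((fst p - fst q) + (fst q - fst r)) by ring.
  replace (snd p - snd r) with ((snd p - snd q) + (snd q - snd r)) by ring.
  apply dist_tri_aux.
Qed.

Lemma Dex_open : forall D, open2 (Dex D).
Proof.
  intros D p Hp. unfold Dex, closure2 in Hp.
  apply not_all_ex_not in Hp. destruct Hp as [e He].
  apply imply_to_and in He. destruct He as [He Hn].
  exists (e / 2). split. lra. intros q Hq Hcq.
  destruct (Hcq (e / 2)) as [z [Hz Hdz]]. lra.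
  apply Hn. exists z. split; auto.
  eapply Rle_lt_trans. apply (dist2_tri p q z). lra.
Qed.

Lemma mvt_sm : forall h a b, Sm h -> exists c, Rmin a b <= c <= Rmax a b /\ h b - h a = Derive h c * (b - a).
Proof.
  intros h a b Hh. apply MVT_gen.
  - intros x _. apply Derive_correct. apply Sm_ex; auto.
  - intros x _. apply continuity_pt_filterlim. apply (Sm_cont h x Hh).
Qed.

Lemma between_ball : forall a b c s r, Rabs (a - s) < r -> Rabs (b - s) < r -> Rmin a b <= c <= Rmax a b ->
  Rabs (c - s) < r.
Proof.
  intros a b c s r Ha Hb Hc. apply Rabs_def2 in Ha. apply Rabs_def2 in Hb.
  unfold Rmin, Rmax in Hc. apply Rabs_def1; destruct (Rle_dec a b); lra.
Qed.


Lemma Rabs_le_b : forall x b, Rabs x <= b -> - b <= x <= b.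
Proof. intros x b H. unfold Rabs in H. destruct (Rcase_abs x); split; lra. Qed.

Lemma dot_lb : forall x y z w, x ^ 2 + y ^ 2 = 1 -> Rabs (z - x) <= 1/4 -> Rabs (w - y) <= 1/4 ->
  z * x + w * y >= 1/2.
Proof.
  intros x y z w H1 H2 H3.
  assert (Hx : Rabs x <= 1) by (apply Rabs_le; nra).
  assert (Hy : Rabs y <= 1) by (apply Rabs_le; nra).
  assert (A : Rabs ((z - x) * x) <= 1/4) by (rewrite Rabs_mult; pose proof (Rabs_pos (z - x)); pose proof (Rabs_pos x); nra).
  assert (B : Rabs ((w - y) * y) <= 1/4) by (rewrite Rabs_mult; pose proof (Rabs_pos (w - y)); pose proof (Rabs_pos y); nra).
  apply Rabs_le_b in A. apply Rabs_le_b in B.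
  nra.
Qed.

Lemma Rabs_mult_le : forall a b B1 B2, Rabs a <= B1 -> Rabs b <= B2 -> Rabs (a * b) <= B1 * B2.
Proof.
  intros a b B1 B2 H1 H2. rewrite Rabs_mult. pose proof (Rabs_pos a). pose proof (Rabs_pos b).
  apply Rmult_le_compat; auto.
Qed.

Section Geo.
Variable D : pt -> Prop.
Variable L : R.
Variable gam : R -> pt.
Variable nv : R -> pt.
Hypothesis HDo : open2 D.
Hypothesis Harc : arclength_param D L gam.
Hypothesis Hout : outward_normal D gam nv.

Definition gx (t : R) : R := fst (gam t).
Definition gy (t : R) : R := snd (gam t).
Definition ax (t : R) : R := Derive gx t.
Definition ay (t : R) : R := Derive gy t.

Lemma L_pos : 0 < L.
Proof. destruct Harc as [H _]. auto. Qed.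

Lemma Sm_gx : Sm gx.
Proof. destruct Harc as [_ [H _]]. intros n x. exact (H (S n) x). Qed.
Lemma Sm_gy : Sm gy.
Proof. destruct Harc as [_ [_ [H _]]]. intros n x. exact (H (S n) x). Qed.

Lemma unit_a : forall t, ax t ^ 2 + ay t ^ 2 = 1.
Proof. destruct Harc as [_ [_ [_ [_ [H _]]]]]. intros t. apply H. Qed.

Lemma ax_le : forall t, Rabs (ax t) <= 1.
Proof. intros t. pose proof (unit_a t). apply Rabs_le. nra. Qed.
Lemma ay_le : forall t, Rabs (ay t) <= 1.
Proof. intros t. pose proof (unit_a t). apply Rabs_le. nra. Qed.

Lemma Sm_ax : Sm ax.
Proof. exact (Sm_Derive _ Sm_gx). Qed.
Lemma Sm_ay : Sm ay.
Proof. exact (Sm_Derive _ Sm_gy). Qed.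

Lemma per_nat : forall (k : nat) t, gam (t + INR k * L) = gam t /\ gam (t - INR k * L) = gam t.
Proof.
  destruct Harc as [_ [_ [_ [Hp _]]]].
  induction k; intros t. simpl. split; f_equal; ring.
  rewrite S_INR. split.
  - replace (t + (INR k + 1) * L) with ((t + INR k * L) + L) by ring. rewrite Hp. apply IHk.
  - rewrite <- (Hp (t - (INR k + 1) * L)). replace (t - (INR k + 1) * L + L) with (t - INR k * L) by ring. apply IHk.
Qed.

Lemma per_Z : forall (n : Z) t, gam (t + IZR n * L) = gam t.
Proof.
  intros n t. destruct (Z.le_gt_cases 0 n).
  - rewrite <- (Z2Nat.id n) by lia. rewrite <- INR_IZR_INZ. apply per_nat.
  - replace (IZR n) with (- INR (Z.to_nat (- n))).
    replace (t + - INR (Z.to_nat (- n)) * L) with (t - INR (Z.to_nat (- n)) * L) by ring. apply per_nat.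
    rewrite INR_IZR_INZ. rewrite Z2Nat.id by lia. rewrite opp_IZR. ring.
Qed.

Lemma red_L : forall x a, exists n : Z, a <= x + IZR n * L < a + L.
Proof.
  intros x a. pose proof L_pos as HL.
  destruct (base_Int_part ((x - a) / L)) as [H1 H2].
  exists (- Int_part ((x - a) / L))%Z. rewrite opp_IZR.
  set (k := IZR (Int_part ((x - a) / L))) in *.
  assert (E : (x - a) / L * L = x - a) by (field; lra).
  split.
  - assert (k * L <= (x - a) / L * L) by (apply Rmult_le_compat_r; lra). lra.
  - assert ((x - a) / L * L < (k + 1) * L) by (apply Rmult_lt_compat_r; lra). lra.
Qed.

Lemma onG : forall t, bdry D (gam t).
Proof.
  intros t. destruct Harc as [_ [_ [_ [_ [_ [_ Hb]]]]]]. apply Hb.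
  destruct (red_L t 0) as [n Hn]. exists (t + IZR n * L). split. lra. symmetry. apply per_Z.
Qed.

Lemma inj_G : forall t t', gam t = gam t' -> exists n : Z, t' = t + IZR n * L.
Proof.
  intros t t' E. destruct Harc as [_ [_ [_ [_ [_ [Hi _]]]]]].
  destruct (red_L t 0) as [n0 Hn0]. destruct (red_L t' 0) as [n1 Hn1].
  assert (Q : t + IZR n0 * L = t' + IZR n1 * L).
  { apply Hi. lra. lra. rewrite !per_Z. auto. }
  exists (n0 - n1)%Z. rewrite minus_IZR. lra.
Qed.

Lemma sig_nv : forall t, exists sg, (sg = 1 \/ sg = -1) /\ nv t = (sg * - ay t, sg * ax t).
Proof.
  intros t. destruct (Hout t) as [Hn [Hd _]].
  destruct (nv t) as [n1 n2] eqn:En. unfold nrm, dot, tangent in *. cbn [fst snd] in *.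
  fold (gx t) in Hd. 
  change (Derive (fun t0 : R => fst (gam t0)) t) with (ax t) in Hd.
  change (Derive (fun t0 : R => snd (gam t0)) t) with (ay t) in Hd.
  assert (Hu := unit_a t).
  assert (Hn2 : n1 ^ 2 + n2 ^ 2 = 1).
  { rewrite <- (sqrt_def (n1 ^ 2 + n2 ^ 2)) by nra. rewrite Hn. ring. }
  set (sg := - n1 * ay t + n2 * ax t). exists sg.
  assert (S2 : sg ^ 2 = 1).
  { unfold sg. replace ((- n1 * ay t + n2 * ax t) ^ 2) with
      ((n1 ^ 2 + n2 ^ 2) * (ax t ^ 2 + ay t ^ 2) - (n1 * ax t + n2 * ay t) ^ 2) by ring.
    rewrite Hn2, Hu, Hd. ring. }
  split.
  - assert ((sg - 1) * (sg + 1) = 0) by nra. apply Rmult_integral in H. destruct H; [left|right]; lra.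
  - f_equal; unfold sg.
    + replace n1 with (n1 * (ax t ^ 2 + ay t ^ 2)) at 1 by (rewrite Hu; ring).
      replace (n1 * (ax t ^ 2 + ay t ^ 2)) with ((n1 * ax t + n2 * ay t) * ax t + (- n1 * ay t + n2 * ax t) * - ay t) by ring.
      rewrite Hd. ring.
    + replace n2 with (n2 * (ax t ^ 2 + ay t ^ 2)) at 1 by (rewrite Hu; ring).
      replace (n2 * (ax t ^ 2 + ay t ^ 2)) with ((n1 * ax t + n2 * ay t) * ay t + (- n1 * ay t + n2 * ax t) * ax t) by ring.
      rewrite Hd. ring.
Qed.

Lemma g_lip : forall a b, Rabs (gx b - gx a) <= Rabs (b - a) /\ Rabs (gy b - gy a) <= Rabs (b - a).
Proof.
  intros a b. split.
  - destruct (mvt_sm gx a b Sm_gx) as [c [_ E]]. rewrite E, Rabs_mult.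
    pose proof (ax_le c). pose proof (Rabs_pos (b - a)). fold (ax c). nra.
  - destruct (mvt_sm gy a b Sm_gy) as [c [_ E]]. rewrite E, Rabs_mult.
    pose proof (ay_le c). pose proof (Rabs_pos (b - a)). fold (ay c). nra.
Qed.


Lemma cR_plus : forall (f g : R -> R) x, continuous f x -> continuous g x -> continuous (fun t => f t + g t) x.
Proof. intros. apply (continuous_plus f g x); auto. Qed.
Lemma cR_mult : forall (f g : R -> R) x, continuous f x -> continuous g x -> continuous (fun t => f t * g t) x.
Proof. intros. apply (continuous_mult f g x); auto. Qed.
Lemma cR_const : forall (a x : R), continuous (fun _ : R => a) x.
Proof. intros. apply continuous_const. Qed.
Lemma cR_comp : forall (f g : R -> R) x, continuous f x -> continuous g (f x) -> continuous (fun t => g (f t)) x.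
Proof. intros. apply (continuous_comp f g x); auto. Qed.
Lemma cR_id : forall x : R, continuous (fun t : R => t) x.
Proof. intros. apply continuous_id. Qed.

Definition Pt (sg t e : R) : pt := (gx t + e * (sg * - ay t), gy t + e * (sg * ax t)).

Lemma sg_abs : forall sg, sg = 1 \/ sg = -1 -> Rabs sg = 1.
Proof. intros sg [-> | ->]; unfold Rabs; destruct (Rcase_abs _); lra. Qed.

Lemma geo_main : forall s, exists r eps sg, 0 < r /\ 0 < eps /\ (sg = 1 \/ sg = -1) /\
  (forall t, Rabs (t - s) < r -> nv t = (sg * - ay t, sg * ax t)) /\
  (forall t e, Rabs (t - s) < r -> 0 < e < eps -> Dex D (Pt sg t e)).
Proof.
  intros s. pose proof L_pos as HL.
  assert (H8 : 0 < 1/8) by lra.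
  destruct (cont1 ax s (Sm_cont ax s Sm_ax) _ H8) as [d1 [Hd1 C1]].
  destruct (cont1 ay s (Sm_cont ay s Sm_ay) _ H8) as [d2 [Hd2 C2]].
  set (r1 := Rmin (Rmin d1 d2) (L / 4)).
  assert (Hr1 : 0 < r1) by (unfold r1; repeat apply Rmin_pos; lra).
  assert (Hr1L : r1 <= L / 4) by (unfold r1; apply Rmin_r).
  assert (Bx : forall u, Rabs (u - s) < r1 -> Rabs (ax u - ax s) < 1/8).
  { intros u Hu. apply C1. eapply Rlt_le_trans; [exact Hu|]. unfold r1. eapply Rle_trans; [apply Rmin_l| apply Rmin_l]. }
  assert (By : forall u, Rabs (u - s) < r1 -> Rabs (ay u - ay s) < 1/8).
  { intros u Hu. apply C2. eapply Rlt_le_trans; [exact Hu|]. unfold r1. eapply Rle_trans; [apply Rmin_l| apply Rmin_r]. }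
  assert (Bx2 : forall u v, Rabs (u - s) < r1 -> Rabs (v - s) < r1 -> Rabs (ax u - ax v) <= 1/4).
  { intros u v Hu Hv. replace (ax u - ax v) with ((ax u - ax s) - (ax v - ax s)) by ring.
    eapply Rle_trans. apply Rabs_triang. rewrite Rabs_Ropp. pose proof (Bx u Hu). pose proof (Bx v Hv). lra. }
  assert (By2 : forall u v, Rabs (u - s) < r1 -> Rabs (v - s) < r1 -> Rabs (ay u - ay v) <= 1/4).
  { intros u v Hu Hv. replace (ay u - ay v) with ((ay u - ay s) - (ay v - ay s)) by ring.
    eapply Rle_trans. apply Rabs_triang. rewrite Rabs_Ropp. pose proof (By u Hu). pose proof (By v Hv). lra. }
  assert (E1 : forall t t' u, Rabs (t - s) < r1 -> Rabs (t' - s) < r1 -> Rabs (u - s) < r1 -> t <= t' ->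
     (gx t' - gx t) * ax u + (gy t' - gy t) * ay u >= (t' - t) / 2).
  { intros t t' u Ht Ht' Hu Htt.
    set (h := fun v => gx v * ax u + gy v * ay u).
    assert (Sh : Sm h).
    { exact (Sm_plus _ _ (Sm_mult gx (fun _ => ax u) Sm_gx (Sm_const _)) (Sm_mult gy (fun _ => ay u) Sm_gy (Sm_const _))). }
    destruct (mvt_sm h t t' Sh) as [c [Hc E]].
    assert (Dh : Derive h c = ax c * ax u + ay c * ay u).
    { apply is_derive_unique. unfold h. apply isd_eq with (ax c * ax u + gx c * 0 + (ay c * ay u + gy c * 0)).
      apply isd_plus.
      apply (isd_mult gx (fun _ => ax u)). apply Derive_correct, Sm_ex, Sm_gx. apply isd_const.
      apply (isd_mult gy (fun _ => ay u)). apply Derive_correct, Sm_ex, Sm_gy. apply isd_const.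
      ring. }
    assert (Hcs : Rabs (c - s) < r1) by (eapply between_ball; [exact Ht| exact Ht'| exact Hc]).
    assert (Lb := dot_lb (ax u) (ay u) (ax c) (ay c) (unit_a u) (Bx2 c u Hcs Hu) (By2 c u Hcs Hu)).
    rewrite Dh in E. unfold h in E.
    replace ((gx t' - gx t) * ax u + (gy t' - gy t) * ay u) with (gx t' * ax u + gy t' * ay u - (gx t * ax u + gy t * ay u)) by ring.
    rewrite E. nra. }
  assert (E1a : forall t t' u, Rabs (t - s) < r1 -> Rabs (t' - s) < r1 -> Rabs (u - s) < r1 ->
     Rabs ((gx t' - gx t) * ax u + (gy t' - gy t) * ay u) >= Rabs (t' - t) / 2).
  { intros t t' u Ht Ht' Hu. destruct (Rle_dec t t') as [Hle|Hgt].
    - pose proof (E1 t t' u Ht Ht' Hu Hle). rewrite !Rabs_right; lra.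
    - pose proof (E1 t' t u Ht' Ht Hu ltac:(lra)).
      rewrite Rabs_left1 by lra. rewrite Rabs_left1; lra. }
  assert (E2 : forall t t', Rabs (t - s) < r1 -> Rabs (t' - s) < r1 ->
     Rabs ((gx t' - gx t) * (- ay t) + (gy t' - gy t) * ax t) <= Rabs (t' - t) / 2).
  { intros t t' Ht Ht'.
    set (h := fun v => gx v * (- ay t) + gy v * ax t).
    assert (Sh : Sm h).
    { exact (Sm_plus _ _ (Sm_mult gx (fun _ => - ay t) Sm_gx (Sm_const _)) (Sm_mult gy (fun _ => ax t) Sm_gy (Sm_const _))). }
    destruct (mvt_sm h t t' Sh) as [c [Hc E]].
    assert (Dh : Derive h c = ax c * (- ay t) + ay c * ax t).
    { apply is_derive_unique. unfold h. apply isd_eq with (ax c * (- ay t) + gx c * 0 + (ay c * ax t + gy c * 0)).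
      apply isd_plus.
      apply (isd_mult gx (fun _ => - ay t)). apply Derive_correct, Sm_ex, Sm_gx. apply isd_const.
      apply (isd_mult gy (fun _ => ax t)). apply Derive_correct, Sm_ex, Sm_gy. apply isd_const.
      ring. }
    assert (Hcs : Rabs (c - s) < r1) by (eapply between_ball; [exact Ht| exact Ht'| exact Hc]).
    rewrite Dh in E. unfold h in E.
    replace ((gx t' - gx t) * (- ay t) + (gy t' - gy t) * ax t) with (gx t' * (- ay t) + gy t' * ax t - (gx t * (- ay t) + gy t * ax t)) by ring.
    rewrite E. rewrite Rabs_mult.
    replace (ax c * - ay t + ay c * ax t) with (- ((ax c - ax t) * ay t) + (ay c - ay t) * ax t).
    2:{ ring. }
    assert (A1 : Rabs (- ((ax c - ax t) * ay t) + (ay c - ay t) * ax t) <= 1/2).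
    { eapply Rle_trans. apply Rabs_triang. rewrite Rabs_Ropp.
      pose proof (Rabs_mult_le _ _ _ _ (Bx2 c t Hcs Ht) (ay_le t)).
      pose proof (Rabs_mult_le _ _ _ _ (By2 c t Hcs Ht) (ax_le t)). lra. }
    pose proof (Rabs_pos (t' - t)). nra. }
  assert (NI : forall sg t t' e, (sg = 1 \/ sg = -1) -> Rabs (t - s) < r1 -> Rabs (t' - s) < r1 ->
     Pt sg t e = gam t' -> e = 0).
  { intros sg t t' e Hsg Ht Ht' EP.
    assert (Ex : gx t' = gx t + e * (sg * - ay t)) by (unfold gx; rewrite <- EP; reflexivity).
    assert (Ey : gy t' = gy t + e * (sg * ax t)) by (unfold gy; rewrite <- EP; reflexivity).
    assert (Hs2 : sg * sg = 1) by (destruct Hsg as [-> | ->]; ring).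
    assert (Hu := unit_a t).
    assert (A : (gx t' - gx t) * (- ay t) + (gy t' - gy t) * ax t = e * sg).
    { rewrite Ex, Ey. replace (e * sg) with (e * sg * (ax t ^ 2 + ay t ^ 2)) by (rewrite Hu; ring). ring. }
    assert (B : (gx t' - gx t) * ax s + (gy t' - gy t) * ay s = e * sg * (- ((ay t - ay s) * ax s) + (ax t - ax s) * ay s)).
    { rewrite Ex, Ey. ring. }
    pose proof (E2 t t' Ht Ht') as HA. rewrite A in HA.
    assert (Hss : Rabs (s - s) < r1) by (rewrite Rminus_diag, Rabs_R0; auto).
    pose proof (E1a t t' s Ht Ht' Hss) as HB. rewrite B in HB.
    rewrite Rabs_mult, (Rabs_mult e sg), (sg_abs sg Hsg) in HB. rewrite Rabs_mult, (sg_abs sg Hsg) in HA.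
    assert (Q : Rabs (- ((ay t - ay s) * ax s) + (ax t - ax s) * ay s) <= 1/4).
    { eapply Rle_trans. apply Rabs_triang. rewrite Rabs_Ropp.
      pose proof (Rabs_mult_le _ _ _ _ (Rlt_le _ _ (By t Ht)) (ax_le s)).
      pose proof (Rabs_mult_le _ _ _ _ (Rlt_le _ _ (Bx t Ht)) (ay_le s)). lra. }
    pose proof (Rabs_pos e). pose proof (Rabs_pos (t' - t)).
    pose proof (Rabs_pos (- ((ay t - ay s) * ax s) + (ax t - ax s) * ay s)).
    assert (Rabs e = 0) by nra. apply Rabs_eq_0 in H2. auto. }
  set (q := fun c => (gx c - gx s) ^ 2 + (gy c - gy s) ^ 2).
  assert (Sq : Sm q).
  { unfold q. apply (Sm_plus (fun c => (gx c - gx s) ^ 2) (fun c => (gy c - gy s) ^ 2)).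
    - apply (Sm_ext (fun c => (gx c - gx s) * ((gx c - gx s) * 1))). intros; simpl; auto.
      apply Sm_mult. apply (Sm_minus gx (fun _ => gx s) Sm_gx (Sm_const _)).
      apply Sm_mult. apply (Sm_minus gx (fun _ => gx s) Sm_gx (Sm_const _)). apply Sm_const.
    - apply (Sm_ext (fun c => (gy c - gy s) * ((gy c - gy s) * 1))). intros; simpl; auto.
      apply Sm_mult. apply (Sm_minus gy (fun _ => gy s) Sm_gy (Sm_const _)).
      apply Sm_mult. apply (Sm_minus gy (fun _ => gy s) Sm_gy (Sm_const _)). apply Sm_const. }
  destruct (continuity_ab_min q (s + r1 / 2) (s + L - r1 / 2)) as [mx [Hmx1 Hmx2]].
  { lra. }
  { intros c _. apply continuity_pt_filterlim. apply (Sm_cont q c Sq). }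
  set (m := q mx).
  assert (Hm : 0 < m).
  { unfold m, q. destruct (Rle_lt_dec ((gx mx - gx s) ^ 2 + (gy mx - gy s) ^ 2) 0) as [Hle|Hlt]; auto.
    exfalso.
    pose proof (pow2_ge_0 (gx mx - gx s)). pose proof (pow2_ge_0 (gy mx - gy s)).
    assert (Z1 : (gx mx - gx s) ^ 2 = 0) by lra. assert (Z2 : (gy mx - gy s) ^ 2 = 0) by lra.
    simpl in Z1, Z2. rewrite Rmult_1_r in Z1, Z2.
    apply Rmult_integral in Z1. apply Rmult_integral in Z2.
    assert (gx mx - gx s = 0) by (destruct Z1; auto). assert (gy mx - gy s = 0) by (destruct Z2; auto).
    assert (X1 : gx mx = gx s) by lra. assert (X2 : gy mx = gy s) by lra.
    assert (Eg : gam s = gam mx).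
    { rewrite (surjective_pairing (gam s)), (surjective_pairing (gam mx)). unfold gx, gy in X1, X2. rewrite X1, X2. auto. }
    destruct (inj_G s mx Eg) as [n En].
    assert (0 < IZR n * L < L) by lra.
    assert (HI : 0 < IZR n < 1).
    { split. apply (Rmult_lt_reg_r L); lra. apply (Rmult_lt_reg_r L); lra. }
    destruct HI as [A1 A2]. apply lt_IZR in A1. apply lt_IZR in A2. lia. }
  set (cp := Rmin (Rmin 1 (m / 16)) (r1 / 2)).
  assert (Hcp : 0 < cp) by (unfold cp; repeat apply Rmin_pos; lra).
  assert (Hcp1 : cp <= 1) by (unfold cp; eapply Rle_trans; [apply Rmin_l| apply Rmin_l]).
  assert (Hcpm : cp <= m / 16) by (unfold cp; eapply Rle_trans; [apply Rmin_l| apply Rmin_r]).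
  assert (Hcpr : cp <= r1 / 2) by (unfold cp; apply Rmin_r).
  set (r := cp / 4). set (eps := cp). set (rho := cp / 32).
  assert (SA : forall sg t e, (sg = 1 \/ sg = -1) -> Rabs (t - s) <= r -> 0 < e < eps -> ~ bdry D (Pt sg t e)).
  { intros sg t e Hsg Ht He Hb.
    destruct Harc as [_ [_ [_ [_ [_ [_ Hbd]]]]]].
    apply Hbd in Hb. destruct Hb as [t' [Ht' EP]].
    destruct (red_L t' (s - r1 / 2)) as [n Hn].
    set (t'' := t' + IZR n * L) in *.
    assert (EP' : Pt sg t e = gam t'') by (unfold t''; rewrite per_Z; auto).
    destruct (Rlt_dec t'' (s + r1 / 2)) as [Hnear|Hfar].
    - assert (N1 : Rabs (t'' - s) < r1) by (apply Rabs_def1; lra).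
      assert (N2 : Rabs (t - s) < r1) by (unfold r in Ht; lra).
      assert (e = 0) by (apply (NI sg t t'' e Hsg N2 N1 EP')). lra.
    - assert (Hq : m <= q t'') by (apply Hmx1; lra).
      unfold q in Hq.
      assert (Ex : gx t'' = gx t + e * (sg * - ay t)) by (unfold gx; rewrite <- EP'; reflexivity).
      assert (Ey : gy t'' = gy t + e * (sg * ax t)) by (unfold gy; rewrite <- EP'; reflexivity).
      rewrite Ex, Ey in Hq.
      destruct (g_lip s t) as [L1 L2].
      assert (Hsa := sg_abs sg Hsg).
      assert (B1 : Rabs (gx t + e * (sg * - ay t) - gx s) <= r + eps).
      { replace (gx t + e * (sg * - ay t) - gx s) with ((gx t - gx s) + e * (sg * - ay t)) by ring.
        eapply Rle_trans. apply Rabs_triang. rewrite !Rabs_mult, Rabs_Ropp, Hsa.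
        pose proof (ay_le t). rewrite Rabs_right with (r := e) by lra.
        assert (e * (1 * Rabs (ay t)) <= e) by nra. lra. }
      assert (B2 : Rabs (gy t + e * (sg * ax t) - gy s) <= r + eps).
      { replace (gy t + e * (sg * ax t) - gy s) with ((gy t - gy s) + e * (sg * ax t)) by ring.
        eapply Rle_trans. apply Rabs_triang. rewrite !Rabs_mult, Hsa.
        pose proof (ax_le t). rewrite Rabs_right with (r := e) by lra.
        assert (e * (1 * Rabs (ax t)) <= e) by nra. lra. }
      assert (Sq1 : (gx t + e * (sg * - ay t) - gx s) ^ 2 <= (r + eps) ^ 2).
      { rewrite <- pow2_abs. pose proof (Rabs_pos (gx t + e * (sg * - ay t) - gx s)). nra. }
      assert (Sq2 : (gy t + e * (sg * ax t) - gy s) ^ 2 <= (r + eps) ^ 2).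
      { rewrite <- pow2_abs. pose proof (Rabs_pos (gy t + e * (sg * ax t) - gy s)). nra. }
      unfold r, eps in Sq1, Sq2. nra. }
  assert (Hrr1 : r < r1) by (unfold r; lra).
  assert (SC : forall (A B : pt -> Prop) sg ta ea tb eb, open2 A -> open2 B -> (forall z, A z -> B z -> False) ->
     (forall z, ~ bdry D z -> A z \/ B z) -> (sg = 1 \/ sg = -1) ->
     Rabs (ta - s) <= r -> 0 < ea < eps -> Rabs (tb - s) <= r -> 0 < eb < eps ->
     A (Pt sg ta ea) -> A (Pt sg tb eb)).
  { intros A B sg ta ea tb eb HA HB Hdis Hcov Hsg Hta Hea Htb Heb H0.
    set (T := fun l => ta + l * (tb - ta)). set (Ee := fun l => ea + l * (eb - ea)).
    set (p1 := fun l => gx (T l) + Ee l * (sg * - ay (T l))).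
    set (p2 := fun l => gy (T l) + Ee l * (sg * ax (T l))).
    assert (CT : forall l, continuous T l).
    { intros l. unfold T. apply cR_plus. apply cR_const. apply cR_mult. apply cR_id. apply cR_const. }
    assert (CE : forall l, continuous Ee l).
    { intros l. unfold Ee. apply cR_plus. apply cR_const. apply cR_mult. apply cR_id. apply cR_const. }
    assert (Cg : forall (g : R -> R) l, Sm g -> continuous (fun l => g (T l)) l).
    { intros g l Hg. apply (cR_comp T g). apply CT. apply Sm_cont; auto. }
    assert (Hc : forall l, 0 <= l <= 1 -> continuous p1 l /\ continuous p2 l).
    { intros l _. split.
      - unfold p1. apply cR_plus. apply Cg, Sm_gx. apply cR_mult. apply CE.
        apply (cR_mult (fun _ => sg) (fun l => - ay (T l))). apply cR_const.
        apply (cR_comp (fun l => ay (T l)) (fun x => - x)). apply Cg, Sm_ay.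
        apply (continuous_opp (fun x : R => x)). apply cR_id.
      - unfold p2. apply cR_plus. apply Cg, Sm_gy. apply cR_mult. apply CE.
        apply (cR_mult (fun _ => sg) (fun l => ax (T l))). apply cR_const. apply Cg, Sm_ax. }
    assert (Hcv : forall l, 0 <= l <= 1 -> A (p1 l, p2 l) \/ B (p1 l, p2 l)).
    { intros l Hl. apply Hcov. change (p1 l, p2 l) with (Pt sg (T l) (Ee l)). apply SA; auto.
      - unfold T. replace (ta + l * (tb - ta) - s) with ((1 - l) * (ta - s) + l * (tb - s)) by ring.
        eapply Rle_trans. apply Rabs_triang. rewrite !Rabs_mult.
        rewrite (Rabs_right (1 - l)) by lra. rewrite (Rabs_right l) by lra. nra.
      - unfold Ee. destruct (Rle_dec ea eb).
        + assert (0 <= l * (eb - ea)) by nra. assert (l * (eb - ea) <= eb - ea) by nra. lra.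
        + assert (l * (eb - ea) <= 0) by nra. assert (eb - ea <= l * (eb - ea)) by nra. lra. }
    assert (E0 : (p1 0, p2 0) = Pt sg ta ea).
    { unfold p1, p2, T, Ee, Pt. rewrite !Rmult_0_l, !Rplus_0_r. reflexivity. }
    assert (E1' : (p1 1, p2 1) = Pt sg tb eb).
    { unfold p1, p2, T, Ee, Pt. replace (ta + 1 * (tb - ta)) with tb by ring.
      replace (ea + 1 * (eb - ea)) with eb by ring. reflexivity. }
    rewrite <- E1'. apply (conn01 A B p1 p2 HA HB Hdis Hc Hcv). rewrite E0. auto. }
  assert (CV : forall qq : pt, Rabs (fst qq - gx s) < rho -> Rabs (snd qq - gy s) < rho ->
     exists t0 e0, Rabs (t0 - s) <= r /\ Rabs e0 < eps /\ qq = (gx t0 + e0 * - ay t0, gy t0 + e0 * ax t0)).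
  { intros [q1 q2] Hq1 Hq2. cbn [fst snd] in *.
    set (chi := fun t => (q1 - gx t) * ax t + (q2 - gy t) * ay t).
    assert (Schi : Sm chi).
    { unfold chi. apply (Sm_plus (fun t => (q1 - gx t) * ax t) (fun t => (q2 - gy t) * ay t)).
      apply Sm_mult. apply (Sm_minus (fun _ => q1) gx (Sm_const _) Sm_gx). exact Sm_ax.
      apply Sm_mult. apply (Sm_minus (fun _ => q2) gy (Sm_const _) Sm_gy). exact Sm_ay. }
    assert (Hsr1 : Rabs (s - r - s) < r1) by (replace (s - r - s) with (- r) by ring; rewrite Rabs_Ropp, Rabs_right; unfold r; lra).
    assert (Hsr2 : Rabs (s + r - s) < r1) by (replace (s + r - s) with r by ring; rewrite Rabs_right; unfold r; lra).
    assert (Hss : Rabs (s - s) < r1) by (rewrite Rminus_diag, Rabs_R0; auto).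
    assert (Hr0 : 0 < r) by (unfold r; lra).
    assert (Bd : forall u, Rabs ((q1 - gx s) * ax u + (q2 - gy s) * ay u) <= 2 * rho).
    { intros u. eapply Rle_trans. apply Rabs_triang.
      pose proof (Rabs_mult_le _ _ _ _ (Rlt_le _ _ Hq1) (ax_le u)).
      pose proof (Rabs_mult_le _ _ _ _ (Rlt_le _ _ Hq2) (ay_le u)). lra. }
    assert (C1' : chi (s - r) > 0).
    { pose proof (E1 (s - r) s (s - r) Hsr1 Hss Hsr1 ltac:(lra)) as X.
      pose proof (Bd (s - r)) as Y. apply Rabs_le_b in Y.
      replace (chi (s - r)) with (((q1 - gx s) * ax (s - r) + (q2 - gy s) * ay (s - r))
          + ((gx s - gx (s - r)) * ax (s - r) + (gy s - gy (s - r)) * ay (s - r))) by (unfold chi; ring).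
      unfold rho, r in *. lra. }
    assert (C2' : chi (s + r) < 0).
    { pose proof (E1 s (s + r) (s + r) Hss Hsr2 Hsr2 ltac:(lra)) as X.
      pose proof (Bd (s + r)) as Y. apply Rabs_le_b in Y.
      replace (chi (s + r)) with (((q1 - gx s) * ax (s + r) + (q2 - gy s) * ay (s + r))
          - ((gx (s + r) - gx s) * ax (s + r) + (gy (s + r) - gy s) * ay (s + r))) by (unfold chi; ring).
      unfold rho, r in *. lra. }
    destruct (IVT (fun t => - chi t) (s - r) (s + r)) as [z [Hz Hz0]].
    { intros x. apply continuity_pt_filterlim. apply (Sm_cont _ x (Sm_opp chi Schi)). }
    { lra. } { lra. } { lra. }
    set (e0 := (q1 - gx z) * (- ay z) + (q2 - gy z) * ax z).
    exists z, e0. assert (Hu := unit_a z).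
    split; [|split].
    - apply Rabs_le. lra.
    - assert (Hzs : Rabs (z - s) <= r) by (apply Rabs_le; lra).
      destruct (g_lip s z) as [L1 L2].
      assert (A1 : Rabs (q1 - gx z) < rho + r).
      { replace (q1 - gx z) with ((q1 - gx s) - (gx z - gx s)) by ring.
        eapply Rle_lt_trans. apply Rabs_triang. rewrite Rabs_Ropp. lra. }
      assert (A2 : Rabs (q2 - gy z) < rho + r).
      { replace (q2 - gy z) with ((q2 - gy s) - (gy z - gy s)) by ring.
        eapply Rle_lt_trans. apply Rabs_triang. rewrite Rabs_Ropp. lra. }
      unfold e0. eapply Rle_lt_trans. apply Rabs_triang.
      rewrite Rabs_mult, Rabs_mult, Rabs_Ropp.
      pose proof (ax_le z). pose proof (ay_le z). pose proof (Rabs_pos (q1 - gx z)). pose proof (Rabs_pos (q2 - gy z)).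
      assert (Rabs (q1 - gx z) * Rabs (ay z) <= Rabs (q1 - gx z)) by nra.
      assert (Rabs (q2 - gy z) * Rabs (ax z) <= Rabs (q2 - gy z)) by nra.
      unfold rho, r, eps in *. lra.
    - assert (Hchi : chi z = 0) by lra. unfold chi in Hchi.
      f_equal.
      + replace q1 with (gx z + (q1 - gx z) * (ax z ^ 2 + ay z ^ 2)) at 1 by (rewrite Hu; ring).
        replace ((q1 - gx z) * (ax z ^ 2 + ay z ^ 2)) with
          (((q1 - gx z) * ax z + (q2 - gy z) * ay z) * ax z + e0 * - ay z) by (unfold e0; ring).
        rewrite Hchi. ring.
      + replace q2 with (gy z + (q2 - gy z) * (ax z ^ 2 + ay z ^ 2)) at 1 by (rewrite Hu; ring).
        replace ((q2 - gy z) * (ax z ^ 2 + ay z ^ 2)) with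
          (((q1 - gx z) * ax z + (q2 - gy z) * ay z) * ay z + e0 * ax z) by (unfold e0; ring).
        rewrite Hchi. ring. }
  assert (Hrho : 0 < rho) by (unfold rho; lra).
  assert (Heps : 0 < eps) by (unfold eps; lra).
  assert (Hr0 : 0 < r) by (unfold r; lra).
  destruct (onG s) as [Hcl _].
  destruct (Hcl rho Hrho) as [qq [HDq Hdq]].
  assert (Hq1 : Rabs (fst qq - gx s) < rho).
  { rewrite Rabs_minus_sym. eapply Rle_lt_trans; [|exact Hdq]. unfold dist2, nrm. cbn [fst snd]. apply nrm_ge_abs1. }
  assert (Hq2 : Rabs (snd qq - gy s) < rho).
  { rewrite Rabs_minus_sym. eapply Rle_lt_trans; [|exact Hdq]. unfold dist2, nrm. cbn [fst snd]. apply nrm_ge_abs2. }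
  destruct (CV qq Hq1 Hq2) as [t0 [e0 [Ht0 [He0 Eq]]]].
  assert (Ex : exists sp ee, (sp = 1 \/ sp = -1) /\ 0 < ee < eps /\ Pt sp t0 ee = qq).
  { destruct (Rtotal_order e0 0) as [Hn|[Hz|Hp]].
    - exists (-1), (- e0). split. right; auto. split. split. lra. rewrite Rabs_left in He0; lra.
      rewrite Eq. unfold Pt. f_equal; ring.
    - exfalso. assert (qq = gam t0).
      { rewrite Eq, Hz. rewrite (surjective_pairing (gam t0)). unfold gx, gy. f_equal; ring. }
      destruct (onG t0) as [_ Hn]. apply Hn. rewrite <- H. auto.
    - exists 1, e0. split. left; auto. split. split. lra. rewrite Rabs_right in He0; lra.
      rewrite Eq. unfold Pt. f_equal; ring. }
  destruct Ex as [sp [ee [Hsp [Hee EP]]]].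
  assert (Dcov : forall z, ~ bdry D z -> D z \/ Dex D z) by (apply D_Dex_cover).
  assert (Dcov' : forall z, ~ bdry D z -> Dex D z \/ D z) by (intros z Hz; destruct (D_Dex_cover D z Hz); auto).
  assert (Ddis' : forall z, Dex D z -> D z -> False) by (intros z A B; apply (D_Dex_disj D z); auto).
  assert (Ht0' : Rabs (t0 - s) <= r) by auto.
  assert (SideD : forall t e, Rabs (t - s) <= r -> 0 < e < eps -> D (Pt sp t e)).
  { intros t e Ht He. apply (SC D (Dex D) sp t0 ee t e HDo (Dex_open D) (D_Dex_disj D) Dcov Hsp Ht0 Hee Ht He).
    rewrite EP. auto. }
  destruct (sig_nv s) as [ss [Hss Ens]].
  destruct (Hout s) as [_ [_ [del [Hdel Hdex]]]].
  set (e1 := Rmin del eps / 2).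
  assert (He1 : 0 < e1 < eps) by (unfold e1; pose proof (Rmin_r del eps); pose proof (Rmin_pos del eps Hdel Heps); lra).
  assert (He1d : 0 < e1 < del) by (unfold e1; pose proof (Rmin_l del eps); pose proof (Rmin_pos del eps Hdel Heps); lra).
  assert (Dx1 : Dex D (Pt ss s e1)).
  { specialize (Hdex e1 He1d). unfold pmove in Hdex. rewrite Ens in Hdex. cbn [fst snd] in Hdex. exact Hdex. }
  assert (Hs0 : Rabs (s - s) <= r) by (rewrite Rminus_diag, Rabs_R0; lra).
  assert (Hne : ss <> sp).
  { intros E. rewrite E in Dx1. apply (D_Dex_disj D _ (SideD s e1 Hs0 He1) Dx1). }
  assert (SideX : forall t e, Rabs (t - s) <= r -> 0 < e < eps -> Dex D (Pt ss t e)).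
  { intros t e Ht He. apply (SC (Dex D) D ss s e1 t e (Dex_open D) HDo Ddis' Dcov' Hss Hs0 He1 Ht He Dx1). }
  exists r, eps, ss. split; [auto|split; [auto|split; [auto|split]]].
  - intros t Ht. destruct (sig_nv t) as [st [Hst Ent]].
    assert (st = ss).
    { destruct (Req_dec st sp) as [E|NE].
      - exfalso. destruct (Hout t) as [_ [_ [dt [Hdt Hdext]]]].
        set (e2 := Rmin dt eps / 2).
        assert (He2 : 0 < e2 < eps) by (unfold e2; pose proof (Rmin_r dt eps); pose proof (Rmin_pos dt eps Hdt Heps); lra).
        assert (He2d : 0 < e2 < dt) by (unfold e2; pose proof (Rmin_l dt eps); pose proof (Rmin_pos dt eps Hdt Heps); lra).
        specialize (Hdext e2 He2d). unfold pmove in Hdext. rewrite Ent in Hdext. cbn [fst snd] in Hdext.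
        apply (D_Dex_disj D (Pt st t e2)). rewrite E. apply SideD; auto. lra. exact Hdext.
      - destruct Hst as [-> | ->]; destruct Hss as [-> | ->]; destruct Hsp as [-> | ->]; auto; lra. }
    rewrite Ent, H. auto.
  - intros t e Ht He. apply SideX; auto. lra.
Qed.

End Geo.

Lemma rlim0_eq : forall (g : R -> Complex.C) l, filterlim g (at_right 0) (locally l) -> rlim0 g = l.
Proof.
  intros g l H. unfold rlim0.
  destruct (excluded_middle_informative _) as [Hex|Hn].
  - destruct (constructive_indefinite_description _ Hex) as [l' Hl']. simpl.
    apply (filterlim_locally_unique (V := C_R_NormedModule) (F := at_right 0) g); auto.
  - exfalso. apply Hn. exists l. auto.
Qed.

Lemma lim_pair : forall (a b : R -> R) la lb,
  filterlim a (at_right 0) (locally la) -> filterlim b (at_right 0) (locally lb) ->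
  filterlim (fun e => ((a e, b e) : Complex.C)) (at_right 0) (locally ((la, lb) : Complex.C)).
Proof.
  intros a b la lb Ha Hb P [eps HP].
  change (at_right 0 (fun e => P (a e, b e))).
  apply filter_imp with (fun e => ball la eps (a e) /\ ball lb eps (b e)).
  intros e [H1 H2]. apply HP. split; auto.
  apply filter_and. apply (Ha (ball la eps)). apply locally_ball. apply (Hb (ball lb eps)). apply locally_ball.
Qed.

Lemma lim_slice : forall (G : pt -> R) s, continuous G (s, 0) ->
  filterlim (fun e => G (s, e)) (at_right 0) (locally (G (s, 0))).
Proof.
  intros G s Hc P [eps HP].
  destruct (cont_contc G (s, 0) Hc eps (cond_pos eps)) as [d [Hd Hq]].
  unfold at_right, within. apply (locR _ _ d Hd). intros y Hy _. apply HP.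
  apply (Hq (s, y)). split; simpl. rewrite Rminus_diag, Rabs_R0; auto. auto.
Qed.

Lemma fst_sum_n : forall (F : nat -> Complex.C) N, fst (sum_n F N) = sum_n (fun j => fst (F j)) N.
Proof.
  intros F N. induction N. rewrite !sum_O. auto.
  rewrite !sum_Sn. rewrite <- IHN. reflexivity.
Qed.

Lemma snd_sum_n : forall (F : nat -> Complex.C) N, snd (sum_n F N) = sum_n (fun j => snd (F j)) N.
Proof.
  intros F N. induction N. rewrite !sum_O. auto.
  rewrite !sum_Sn. rewrite <- IHN. reflexivity.
Qed.

Lemma sumR_plus : forall (u v : nat -> R) N, sum_n (fun j => u j + v j) N = sum_n u N + sum_n v N.
Proof. intros. apply (sum_n_plus u v N). Qed.

Lemma sumR_zero : forall N, sum_n (fun _ : nat => 0) N = 0.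
Proof. induction N. rewrite sum_O; auto. rewrite sum_Sn, IHN. change (0 + 0 = 0). ring. Qed.

Lemma sumR_ind : forall (c : R) (X : nat -> R) j0 N, (j0 <= N)%nat ->
  sum_n (fun j => (if Nat.eqb j0 j then c else 0) * X j) N = c * X j0.
Proof.
  intros c X j0 N. induction N; intros H.
  - rewrite sum_O. assert (j0 = 0%nat) by lia. subst. simpl. reflexivity.
  - rewrite sum_Sn. destruct (Nat.eq_dec j0 (S N)) as [E|NE].
    + subst. rewrite Nat.eqb_refl.
      rewrite (sum_n_ext_loc _ (fun _ => 0)). rewrite sumR_zero. change (0 + c * X (S N) = c * X (S N)). ring.
      intros n Hn. destruct (Nat.eqb_spec (S N) n). lia. apply Rmult_0_l.
    + rewrite IHN by lia. destruct (Nat.eqb_spec j0 (S N)). lia. change (c * X j0 + 0 * X (S N) = c * X j0). ring.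
Qed.

Lemma sumR_ext : forall (u v : nat -> R) N, (forall n, u n = v n) -> sum_n u N = sum_n v N.
Proof. intros. apply sum_n_ext. auto. Qed.

Definition coefA (l : list RT) (b0 : bool) (j : nat) (s : R) : R :=
  fold_right (fun (t : RT) acc => let '(c, b, j') := t in
    (if andb (Bool.eqb b b0) (Nat.eqb j' j) then c s else 0) + acc) 0 l.

Lemma evalR_sum : forall g1 g2 sg f N l s, okR N l ->
  evalR g1 g2 sg f l s = sum_n (fun j => coefA l false j s * Derive_n (GG g1 g2 sg f 0) j s
                                        + coefA l true j s * Derive_n (GG g1 g2 sg f 1) j s) N.
Proof.
  intros g1 g2 sg f N l s Hok. induction Hok as [|[[c b] j0] l [Hc Hj] Hl IH].
  - simpl. rewrite (sumR_ext _ (fun _ => 0)). rewrite sumR_zero. auto. intros n. ring.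
  - simpl in Hj. simpl evalR. rewrite IH.
    rewrite (sumR_ext (fun j => coefA ((c, b, j0) :: l) false j s * Derive_n (GG g1 g2 sg f 0) j s
                              + coefA ((c, b, j0) :: l) true j s * Derive_n (GG g1 g2 sg f 1) j s) (fun j => ((if andb (Bool.eqb b false) (Nat.eqb j0 j) then c s else 0) * Derive_n (GG g1 g2 sg f 0) j s
                                  + (if andb (Bool.eqb b true) (Nat.eqb j0 j) then c s else 0) * Derive_n (GG g1 g2 sg f 1) j s)
                                 + (coefA l false j s * Derive_n (GG g1 g2 sg f 0) j s
                                  + coefA l true j s * Derive_n (GG g1 g2 sg f 1) j s))).
    2:{ intros n. simpl coefA. ring. }
    rewrite (sumR_plus (fun j => (if andb (Bool.eqb b false) (Nat.eqb j0 j) then c s else 0) * Derive_n (GG g1 g2 sg f 0) j s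
                                  + (if andb (Bool.eqb b true) (Nat.eqb j0 j) then c s else 0) * Derive_n (GG g1 g2 sg f 1) j s)
                       (fun j => coefA l false j s * Derive_n (GG g1 g2 sg f 0) j s
                                  + coefA l true j s * Derive_n (GG g1 g2 sg f 1) j s)).
    f_equal.
    destruct b; simpl.
    + rewrite (sumR_ext _ (fun j => (if Nat.eqb j0 j then c s else 0) * Derive_n (GG g1 g2 sg f 1) j s)).
      rewrite sumR_ind; auto. intros n. ring.
    + rewrite (sumR_ext _ (fun j => (if Nat.eqb j0 j then c s else 0) * Derive_n (GG g1 g2 sg f 0) j s)).
      rewrite sumR_ind; auto. intros n. ring.
Qed.

Section Final.
Variable D : pt -> Prop.
Variable L : R.
Variables gam nv : R -> pt.
Variables alpha k lam : R.
Hypothesis HDo : open2 D.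
Hypothesis Harc : arclength_param D L gam.
Hypothesis Hout : outward_normal D gam nv.
Hypothesis Hal : 0 < alpha.
Variables s r eps sg : R.
Hypothesis Hr : 0 < r.
Hypothesis Heps : 0 < eps.
Hypothesis Hsg : sg = 1 \/ sg = -1.
Hypothesis Hnv : forall t, Rabs (t - s) < r -> nv t = (sg * - ay gam t, sg * ax gam t).
Hypothesis HDex : forall t e, Rabs (t - s) < r -> 0 < e < eps -> Dex D (Pt gam sg t e).

Definition G1 := gx gam.
Definition G2 := gy gam.
Lemma SG1 : Sm G1. Proof. exact (Sm_gx D L gam Harc). Qed.
Lemma SG2 : Sm G2. Proof. exact (Sm_gy D L gam Harc). Qed.
Lemma HunitG : forall t, Derive G1 t ^ 2 + Derive G2 t ^ 2 = 1.
Proof. exact (unit_a D L gam Harc). Qed.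

Definition FF (t e : R) : pt := Fm G1 G2 (nn1 G2 sg) (nn2 G1 sg) t e.

Lemma FF_Pt : forall t e, FF t e = Pt gam sg t e.
Proof. reflexivity. Qed.

Lemma pm_FF : forall t e, Rabs (t - s) < r -> pmove (gam t) e (nv t) = FF t e.
Proof. intros t e Ht. unfold pmove. rewrite (Hnv t Ht). reflexivity. Qed.

Lemma FF0 : forall t, FF t 0 = gam t.
Proof.
  intros t. unfold FF, Fm. rewrite !Rmult_0_l, !Rplus_0_r. unfold G1, G2, gx, gy.
  symmetry. apply surjective_pairing.
Qed.

Lemma adm_f : forall O f, open2 O -> (forall p, closure2 (Dex D) p -> O p) -> smooth_on O f ->
  (forall p, Dex D p -> alpha * lap f p + k ^ 2 * f p = 0) ->
  Adm G1 G2 sg alpha k s f.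
Proof.
  intros O f HO HcO Hf Hp. exists O. split; auto. split; auto.
  exists r. split; auto. intros x Hx. split.
  - assert (HW : W0 G1 G2 sg O (x, 0)).
    { apply HcO. intros e0 He0.
      set (eta := Rmin eps e0 / 4).
      assert (Heta : 0 < eta < eps) by (unfold eta; pose proof (Rmin_l eps e0); pose proof (Rmin_pos eps e0 Heps He0); lra).
      assert (Heta2 : eta < e0 / 2) by (unfold eta; pose proof (Rmin_r eps e0); pose proof (Rmin_pos eps e0 Heps He0); lra).
      exists (FF x eta). split. rewrite FF_Pt. apply HDex; auto.
      apply inbox_dist. unfold FF, Fm. split; cbn [fst snd].
      - replace (G1 x + eta * nn1 G2 sg x - (G1 x + 0 * nn1 G2 sg x)) with (eta * nn1 G2 sg x) by ring.
        rewrite Rabs_mult. unfold nn1. rewrite Rabs_mult, Rabs_Ropp, (sg_abs sg Hsg).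
        pose proof (ay_le D L gam Harc x). unfold ay in H. fold G2 in H.
        rewrite Rabs_right by lra. nra.
      - replace (G2 x + eta * nn2 G1 sg x - (G2 x + 0 * nn2 G1 sg x)) with (eta * nn2 G1 sg x) by ring.
        rewrite Rabs_mult. unfold nn2. rewrite Rabs_mult, (sg_abs sg Hsg).
        pose proof (ax_le D L gam Harc x). unfold ax in H. fold G1 in H.
        rewrite Rabs_right by lra. nra. }
    destruct (Wm_boxed G1 G2 _ _ SG1 SG2 (Sm_nn1 G2 SG2 sg) (Sm_nn2 G1 SG1 sg) O HO (x, 0) HW) as [d [Hd Hb]].
    exists d. split; auto.
  - exists eps. split; auto. intros y Hy. split.
    + apply HcO. apply closure_of. change (Dex D (FF x y)). rewrite FF_Pt. apply HDex; auto.
    + apply Hp. change (Dex D (FF x y)). rewrite FF_Pt. apply HDex; auto.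
Qed.

Section Comp.
Variable u : pt -> Complex.C.
Variable pr : Complex.C -> R.
Hypothesis Hpr : forall g n t, pr (Cderive_n g n t) = Derive_n (fun x => pr (g x)) n t.
Variable O : pt -> Prop.
Hypothesis HO : open2 O.
Hypothesis HcO : forall p, closure2 (Dex D) p -> O p.
Hypothesis Hf : smooth_on O (fun p => pr (u p)).

Definition ff1 := fun p => pr (u p).

Lemma Ws0 : W0 G1 G2 sg O (s, 0).
Proof.
  apply HcO. intros e0 He0.
  set (eta := Rmin eps e0 / 4).
  assert (Heta : 0 < eta < eps) by (unfold eta; pose proof (Rmin_l eps e0); pose proof (Rmin_pos eps e0 Heps He0); lra).
  assert (Heta2 : eta < e0 / 2) by (unfold eta; pose proof (Rmin_r eps e0); pose proof (Rmin_pos eps e0 Heps He0); lra).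
  assert (Hs : Rabs (s - s) < r) by (rewrite Rminus_diag, Rabs_R0; auto).
  exists (FF s eta). split. rewrite FF_Pt. apply HDex; auto.
  apply inbox_dist. unfold FF, Fm. split; cbn [fst snd].
  - replace (G1 s + eta * nn1 G2 sg s - (G1 s + 0 * nn1 G2 sg s)) with (eta * nn1 G2 sg s) by ring.
    rewrite Rabs_mult. unfold nn1. rewrite Rabs_mult, Rabs_Ropp, (sg_abs sg Hsg).
    pose proof (ay_le D L gam Harc s). unfold ay in H. fold G2 in H.
    rewrite Rabs_right by lra. nra.
  - replace (G2 s + eta * nn2 G1 sg s - (G2 s + 0 * nn2 G1 sg s)) with (eta * nn2 G1 sg s) by ring.
    rewrite Rabs_mult. unfold nn2. rewrite Rabs_mult, (sg_abs sg Hsg).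
    pose proof (ax_le D L gam Harc s). unfold ax in H. fold G1 in H.
    rewrite Rabs_right by lra. nra.
Qed.

Lemma Ucont : forall w, continuous (ipd w (U0 G1 G2 sg ff1)) (s, 0).
Proof. intros w. apply (U0_smooth G1 G2 SG1 SG2 sg ff1 O HO Hf w (s, 0) Ws0). Qed.

Lemma comp_dn : forall N, filterlim (fun e => pr (Cderive_n (Ufun gam nv u s) N e)) (at_right 0)
  (locally (GG G1 G2 sg ff1 N s)).
Proof.
  intros N.
  assert (Hs : Rabs (s - s) < r) by (rewrite Rminus_diag, Rabs_R0; auto).
  apply (filterlim_ext (fun e => ipd (repeat false N ++ nil) (U0 G1 G2 sg ff1) (s, e))).
  - intros e. rewrite Hpr. rewrite <- Dn_eta. apply Derive_n_ext. intros x.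
    unfold Ufun. rewrite pm_FF by auto. reflexivity.
  - unfold GG, gg.
    assert (E : ipd (repeat false N) (U0 G1 G2 sg ff1) (s, 0) = ipd (repeat false N ++ nil) (U0 G1 G2 sg ff1) (s, 0))
      by (rewrite app_nil_r; auto).
    rewrite E. apply lim_slice. apply Ucont.
Qed.

Lemma comp_dt : forall j, pr (dtau gam u j s) = Derive_n (GG G1 G2 sg ff1 0) j s.
Proof.
  intros j. unfold dtau. rewrite Hpr. apply Derive_n_ext. intros x.
  unfold GG, gg. simpl. unfold U0, UU, Um, ff1. cbn [fst snd]. fold (FF x 0). rewrite FF0. auto.
Qed.

Lemma comp_dtdn : forall j, filterlim (fun e => pr (Cderive_n (fun t => Cderive_n (Ufun gam nv u t) 1 e) j s))
  (at_right 0) (locally (Derive_n (GG G1 G2 sg ff1 1) j s)).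
Proof.
  intros j.
  apply (filterlim_ext (fun e => ipd (repeat true j ++ false :: nil) (U0 G1 G2 sg ff1) (s, e))).
  - intros e. rewrite Hpr. rewrite <- Dn_t.
    apply Derive_n_ext_loc.
    apply (locR _ _ r Hr). intros t Ht.
    rewrite Hpr. change (false :: nil) with (repeat false 1 ++ nil). rewrite <- Dn_eta.
    apply Derive_n_ext. intros x. unfold Ufun. rewrite pm_FF by auto. reflexivity.
  - rewrite Dn_gg. apply lim_slice. apply Ucont.
Qed.

End Comp.

Lemma KEY : forall N, exists A B : nat -> R, forall bc phi u,
  scattered_field D L gam nv alpha k lam bc phi u ->
  dnN gam nv u N s =
  Cplus (sum_n (fun j => Cmult (RtoC (A j)) (dtau gam u j s)) N)
        (sum_n (fun j => Cmult (RtoC (B j)) (dtau_dn gam nv u j s)) N).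
Proof.
  intros N.
  assert (Halpha : alpha <> 0) by lra.
  destruct (Rep_main G1 G2 SG1 SG2 HunitG sg Hsg alpha k Halpha s N N (le_n N) 0) as [l [Hok HE]].
  exists (fun j => coefA l false j s), (fun j => coefA l true j s).
  intros bc phi u Hsc.
  destruct Hsc as [_ [[O [HO [HcO [Hs1 Hs2]]]] [Hh _]]].
  assert (Hpr1 : forall g n t, fst (Cderive_n g n t) = Derive_n (fun x => fst (g x)) n t) by reflexivity.
  assert (Hpr2 : forall g n t, snd (Cderive_n g n t) = Derive_n (fun x => snd (g x)) n t) by reflexivity.
  assert (A1 : Adm G1 G2 sg alpha k s (fun p => fst (u p))).
  { apply (adm_f O); auto. intros p Hp. apply (Hh p Hp). }
  assert (A2 : Adm G1 G2 sg alpha k s (fun p => snd (u p))).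
  { apply (adm_f O); auto. intros p Hp. apply (Hh p Hp). }
  assert (Hs : Rabs (s - s) < r) by (rewrite Rminus_diag, Rabs_R0; auto).
  destruct (HE _ A1) as [r1 [Hr1 E1]]. destruct (HE _ A2) as [r2 [Hr2 E2]].
  assert (Hs1' : Rabs (s - s) < r1) by (rewrite Rminus_diag, Rabs_R0; auto).
  assert (Hs2' : Rabs (s - s) < r2) by (rewrite Rminus_diag, Rabs_R0; auto).
  specialize (E1 s Hs1'). specialize (E2 s Hs2'). simpl in E1, E2.
  rewrite (evalR_sum _ _ _ _ N l s Hok) in E1. rewrite (evalR_sum _ _ _ _ N l s Hok) in E2.
  assert (Ldn : dnN gam nv u N s = (GG G1 G2 sg (fun p => fst (u p)) N s, GG G1 G2 sg (fun p => snd (u p)) N s)).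
  { unfold dnN. apply rlim0_eq.
    apply (filterlim_ext (fun e => (fst (Cderive_n (Ufun gam nv u s) N e), snd (Cderive_n (Ufun gam nv u s) N e)) : Complex.C)).
    intros e. symmetry. apply surjective_pairing.
    apply lim_pair.
    apply (comp_dn u fst Hpr1 O HO HcO Hs1).
    apply (comp_dn u snd Hpr2 O HO HcO Hs2). }
  assert (Ldtdn : forall j, dtau_dn gam nv u j s =
     (Derive_n (GG G1 G2 sg (fun p => fst (u p)) 1) j s, Derive_n (GG G1 G2 sg (fun p => snd (u p)) 1) j s)).
  { intros j. unfold dtau_dn. apply rlim0_eq.
    apply (filterlim_ext (fun e => (fst (Cderive_n (fun t => Cderive_n (Ufun gam nv u t) 1 e) j s),
                                     snd (Cderive_n (fun t => Cderive_n (Ufun gam nv u t) 1 e) j s)) : Complex.C)).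
    intros e. symmetry. apply surjective_pairing.
    apply lim_pair.
    apply (comp_dtdn u fst Hpr1 O HO HcO Hs1).
    apply (comp_dtdn u snd Hpr2 O HO HcO Hs2). }
  assert (Ldt : forall j, dtau gam u j s =
     (Derive_n (GG G1 G2 sg (fun p => fst (u p)) 0) j s, Derive_n (GG G1 G2 sg (fun p => snd (u p)) 0) j s)).
  { intros j. apply injective_projections; cbn [fst snd].
    apply (comp_dt u fst Hpr1). apply (comp_dt u snd Hpr2). }
  rewrite Ldn. apply injective_projections.
  - unfold Cplus. cbn [fst]. rewrite !fst_sum_n. rewrite E1.
    rewrite <- sumR_plus. apply sumR_ext. intros j. rewrite Ldt, Ldtdn. unfold Cmult, RtoC. cbn [fst snd]. ring.
  - unfold Cplus. cbn [snd]. rewrite !snd_sum_n. rewrite E2.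
    rewrite <- sumR_plus. apply sumR_ext. intros j. rewrite Ldt, Ldtdn. unfold Cmult, RtoC. cbn [fst snd]. ring.
Qed.

End Final.

Theorem theorem3p1 :
  forall (D : pt -> Prop) (L : R) (gam nv : R -> pt) (alpha k lam : R),
    open2 D -> bounded2 D -> simply_connected2 D ->
    arclength_param D L gam -> outward_normal D gam nv ->
    0 < alpha -> 0 < k ->
    exists a b : nat -> nat -> R -> C,
      forall (bc : bc_kind) (phi : incident) (u : pt -> C),
        scattered_field D L gam nv alpha k lam bc phi u ->
        forall (N : nat) (s : R), 0 <= s <= L ->
          dnN gam nv u N s =
          Cplus (sum_n (fun j => Cmult (a N j s) (dtau gam u j s)) N)
                (sum_n (fun j => Cmult (b N j s) (dtau_dn gam nv u j s)) N).
Proof.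
  intros D L gam nv alpha k lam HDo _ _ Harc Hout Hal _.
  assert (KEY' : forall (N : nat) (s : R), exists AB : (nat -> R) * (nat -> R),
    forall bc phi u, scattered_field D L gam nv alpha k lam bc phi u ->
      dnN gam nv u N s =
      Cplus (sum_n (fun j => Cmult (RtoC (fst AB j)) (dtau gam u j s)) N)
            (sum_n (fun j => Cmult (RtoC (snd AB j)) (dtau_dn gam nv u j s)) N)).
  { intros N s.
    destruct (geo_main D L gam nv HDo Harc Hout s) as [r [eps [sg [Hr [Heps [Hsg [Hnv HDex]]]]]]].
    destruct (KEY D L gam nv alpha k lam Harc Hal s r eps sg Hr Heps Hsg Hnv HDex N) as [A [B HAB]].
    exists (A, B). exact HAB. }
  exists (fun N j s => RtoC (fst (proj1_sig (constructive_indefinite_description _ (KEY' N s))) j)).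
  exists (fun N j s => RtoC (snd (proj1_sig (constructive_indefinite_description _ (KEY' N s))) j)).
  intros bc phi u Hsc N s _.
  destruct (constructive_indefinite_description _ (KEY' N s)) as [AB HAB]. simpl.
  exact (HAB bc phi u Hsc).
Qed.
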